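(* Let $\beta<1$ be real and $\alpha=1$. Then the $\beta$-Ces\`aro operator $C_\beta$ maps $\mathcal{B}_1^0$ into $\mathcal{B}_1^0$ and is a bounded linear operator from $(\mathcal{B}_1^0,\|\cdot\|_{\mathcal{B}_1})$ to itself.
   Context: $\mathbb{D}=\{z\in\mathbb{C}:|z|<1\}$. For $\alpha>0$, the $\alpha$-Bloch space $\mathcal{B}_\alpha$ is the space of analytic functions $f$ on $\mathbb{D}$ with $\|f\|_{\mathcal{B}_\alpha}:=\sup_{z\in\mathbb{D}}(1-|z|^2)^\alpha|f'(z)|<\infty$. $\mathcal{B}_\alpha^0=\{f\in\mathcal{B}_\alpha: f(0)=0\}$, normed by $\|\cdot\|_{\mathcal{B}_\alpha}$. For $\beta\in\mathbb{R}$, the $\beta$-Ces\`aro operator is $C_\beta(f)(z)=\int_0^z \frac{f(w)}{w(1-w)^\beta}\,dw$ for analytic $f$ on $\mathbb{D}$ with $f(0)=0$, where $(1-w)^{\beta}$ is defined by the principal branch. *)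

(* Defs.v *)
From Stdlib Require Import Reals.
From Coquelicot Require Export Coquelicot.
Open Scope R_scope.

(* Principal argument of a complex number, with values in (-PI, PI]
   (and Arg 0 = 0 by convention). *)
Definition Arg (w : C) : R :=
  let x := fst w in let y := snd w in
  if Rlt_dec 0 x then atan (y / x)
  else if Rlt_dec x 0 then
    (if Rle_dec 0 y then atan (y / x) + PI else atan (y / x) - PI)
  else if Rlt_dec 0 y then PI / 2
  else if Rlt_dec y 0 then - (PI / 2)
  else 0.

Definition Clog (w : C) : C := (ln (Cmod w), Arg w).

Definition Cexp (w : C) : C :=
  (exp (fst w) * cos (snd w), exp (fst w) * sin (snd w)).

Definition Cpow (w : C) (b : R) : C := Cexp (Cmult (RtoC b) (Clog w)).

Definition in_disc (z : C) : Prop := Cmod z < 1.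

Definition analytic_disc (f : C -> C) : Prop :=
  forall z : C, in_disc z -> @ex_derive C_AbsRing C_NormedModule f z.

Definition bloch_vals (f : C -> C) (r : R) : Prop :=
  exists (z l : C), in_disc z /\ @is_derive C_AbsRing C_NormedModule f z l /\
    r = (1 - Cmod z ^ 2) * Cmod l.

Definition bloch_norm (f : C -> C) : R := real (Lub_Rbar (bloch_vals f)).

Definition in_B1 (f : C -> C) : Prop :=
  analytic_disc f /\ exists M : R, forall r, bloch_vals f r -> r <= M.

Definition in_B10 (f : C -> C) : Prop := in_B1 f /\ f (RtoC 0) = RtoC 0.

(* beta-Cesaro operator: C_beta f (z) = int_0^z f(w) / (w (1-w)^beta) dw,
   the integral taken along the segment [0, z], w = t z, dw = z dt. *)
Definition cesaro (beta : R) (f : C -> C) (z : C) : C :=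
  @RInt C_R_CompleteNormedModule
    (fun t : R =>
       Cmult (Cdiv (f (Cmult (RtoC t) z))
                   (Cmult (Cmult (RtoC t) z)
                          (Cpow (Cminus (RtoC 1) (Cmult (RtoC t) z)) beta)))
             z) 0 1.

(* Main.v *)
Require Import Defs.
From Stdlib Require Import Reals Lra Psatz Arith Lia.
From Coquelicot Require Import Coquelicot.
Open Scope R_scope.

Definition CD (f : C -> C) (z l : C) : Prop :=
  forall eps : R, 0 < eps -> exists del : R, 0 < del /\
    forall w, Cmod (Cminus w z) < del ->
      Cmod (Cminus (Cminus (f w) (f z)) (Cmult l (Cminus w z))) <= eps * Cmod (Cminus w z).

Lemma CD_is_derive f z l : CD f z l -> @is_derive C_AbsRing C_NormedModule f z l.
Proof.
  intros H. split.
  - split.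
    + intros x y. simpl. change (Cmult (Cplus x y) l = Cplus (Cmult x l) (Cmult y l)). ring.
    + intros k x. simpl. change (Cmult (Cmult k x) l = Cmult k (Cmult x l)). ring.
    + exists (Cmod l + 1). split. pose proof (Cmod_ge_0 l). lra.
      intros x. change (Cmod (Cmult x l) <= (Cmod l + 1) * Cmod x).
      rewrite Cmod_mult. pose proof (Cmod_ge_0 l). pose proof (Cmod_ge_0 x). nra.
    intros x Hx. apply (@is_filter_lim_locally_unique C_AbsRing (AbsRing_NormedModule C_AbsRing)) in Hx. subst x.
    intros eps.
    destruct (H eps (cond_pos eps)) as [d [Hd Hw]].
    exists (mkposreal d Hd). intros y Hy. apply Hw in Hy.
    change (Cmod (Cminus (Cminus (f y) (f z)) (Cmult (Cminus y z) l)) <= eps * Cmod (Cminus y z)).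
    rewrite (Cmult_comm (Cminus y z) l). exact Hy.
Qed.

Lemma is_derive_CD f z l : @is_derive C_AbsRing C_NormedModule f z l -> CD f z l.
Proof.
  intros [_ H] eps Heps.
  specialize (H z (fun P HP => HP)).
  specialize (H (mkposreal eps Heps)).
  destruct H as [d Hd].
  exists d. split. apply cond_pos. intros w Hw.
  specialize (Hd w Hw). change (Cmod (Cminus (Cminus (f w) (f z)) (Cmult (Cminus w z) l)) <= eps * Cmod (Cminus w z)) in Hd.
  rewrite (Cmult_comm l). exact Hd.
Qed.

Definition isD (f : C -> C) (z l : C) := @is_derive C_AbsRing (AbsRing_NormedModule C_AbsRing) f z l.

Lemma CD_isD f z l : CD f z l -> isD f z l.
Proof.
  intros H. split.
  - split.
    + intros x y. simpl. change (Cmult (Cplus x y) l = Cplus (Cmult x l) (Cmult y l)). ring.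
    + intros k x. simpl. change (Cmult (Cmult k x) l = Cmult k (Cmult x l)). ring.
    + exists (Cmod l + 1). split. pose proof (Cmod_ge_0 l). lra.
      intros x. change (Cmod (Cmult x l) <= (Cmod l + 1) * Cmod x).
      rewrite Cmod_mult. pose proof (Cmod_ge_0 l). pose proof (Cmod_ge_0 x). nra.
  - intros x Hx. apply (@is_filter_lim_locally_unique C_AbsRing (AbsRing_NormedModule C_AbsRing)) in Hx. subst x.
    intros eps.
    destruct (H eps (cond_pos eps)) as [d [Hd Hw]].
    exists (mkposreal d Hd). intros y Hy. apply Hw in Hy.
    change (Cmod (Cminus (Cminus (f y) (f z)) (Cmult (Cminus y z) l)) <= eps * Cmod (Cminus y z)).
    rewrite (Cmult_comm (Cminus y z) l). exact Hy.
Qed.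

Lemma isD_CD f z l : isD f z l -> CD f z l.
Proof.
  intros [_ H] eps Heps.
  specialize (H z (fun P HP => HP)).
  specialize (H (mkposreal eps Heps)).
  destruct H as [d Hd].
  exists d. split. apply cond_pos. intros w Hw.
  specialize (Hd w Hw). change (Cmod (Cminus (Cminus (f w) (f z)) (Cmult (Cminus w z) l)) <= eps * Cmod (Cminus w z)) in Hd.
  rewrite (Cmult_comm l). exact Hd.
Qed.

Lemma isD_plus f g z a b : isD f z a -> isD g z b -> isD (fun w => Cplus (f w) (g w)) z (Cplus a b).
Proof. intros H H0. exact (@is_derive_plus C_AbsRing (AbsRing_NormedModule C_AbsRing) f g z a b H H0). Qed.

Lemma isD_comp f g z a b : isD f (g z) a -> isD g z b -> isD (fun w => f (g w)) z (Cmult b a).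
Proof. intros H H0. exact (@is_derive_comp C_AbsRing (AbsRing_NormedModule C_AbsRing) f g z a b H H0). Qed.

Lemma isD_mult f g z a b : isD f z a -> isD g z b ->
  isD (fun w => Cmult (f w) (g w)) z (Cplus (Cmult a (g z)) (Cmult (f z) b)).
Proof.
  intros Hf Hg.
  pose proof (@filterdiff_mult_fct C_AbsRing (AbsRing_NormedModule C_AbsRing) f g z _ _ Cmult_comm Hf Hg) as H.
  unfold isD, is_derive. eapply filterdiff_ext_lin. exact H.
  intros y. simpl. change (Cplus (Cmult (Cmult y a) (g z)) (Cmult (f z) (Cmult y b)) = Cmult y (Cplus (Cmult a (g z)) (Cmult (f z) b))). ring.
Qed.

Lemma isD_const c z : isD (fun _ => c) z (RtoC 0).
Proof. exact (@is_derive_const C_AbsRing (AbsRing_NormedModule C_AbsRing) c z). Qed.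

Lemma isD_id z : isD (fun w => w) z (RtoC 1).
Proof. exact (@is_derive_id C_AbsRing z). Qed.

Lemma isD_ext f g z l : (forall w, f w = g w) -> isD f z l -> isD g z l.
Proof. intros; eapply is_derive_ext; eauto. Qed.

Lemma isD_ext_loc f g z l : (exists d, 0 < d /\ forall w, Cmod (Cminus w z) < d -> f w = g w) -> isD f z l -> isD g z l.
Proof. intros [d [Hd H]] Hf. eapply is_derive_ext_loc; eauto. exists (mkposreal d Hd). intros y Hy. apply H. exact Hy. Qed.

Lemma isD_derive f z l : isD f z l <-> @is_derive C_AbsRing C_NormedModule f z l.
Proof. split; intros H. apply CD_is_derive, isD_CD, H. apply CD_isD, is_derive_CD, H. Qed.

Lemma Cmod_sub_ge (w z : C) : Cmod z - Cmod (Cminus w z) <= Cmod w.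
Proof.
  pose proof (Cmod_triangle w (Cminus z w)).
  replace (Cplus w (Cminus z w)) with z in H by ring.
  replace (Cminus z w) with (Copp (Cminus w z)) in H by ring. rewrite Cmod_opp in H. lra.
Qed.

Lemma Cmod_sub_le (w z : C) : Cmod w <= Cmod z + Cmod (Cminus w z).
Proof.
  pose proof (Cmod_triangle z (Cminus w z)).
  replace (Cplus z (Cminus w z)) with w in H by ring. lra.
Qed.

Lemma isD_inv z : z <> RtoC 0 -> isD Cinv z (Copp (Cinv (Cmult z z))).
Proof.
  intros Hz. apply CD_isD. intros eps Heps.
  assert (Hm : 0 < Cmod z) by (apply Cmod_gt_0; auto).
  exists (Rmin (Cmod z / 2) (eps * (Cmod z * Cmod z * Cmod z) / 2)). split.
  { apply Rmin_pos. lra. apply Rdiv_lt_0_compat; [|lra]. apply Rmult_lt_0_compat; [lra|]. apply Rmult_lt_0_compat; [nra|lra]. }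
  intros w Hw.
  assert (H1 : Cmod (Cminus w z) < Cmod z / 2) by (eapply Rlt_le_trans; [exact Hw| apply Rmin_l]).
  assert (H2 : Cmod (Cminus w z) < eps * (Cmod z * Cmod z * Cmod z) / 2) by (eapply Rlt_le_trans; [exact Hw| apply Rmin_r]).
  pose proof (Cmod_sub_ge w z).
  assert (Hw0 : w <> RtoC 0). { intros ->. rewrite Cmod_0 in H. lra. }
  assert (E : Cminus (Cminus (Cinv w) (Cinv z)) (Cmult (Copp (Cinv (Cmult z z))) (Cminus w z))
          = Cmult (Cmult (Cminus w z) (Cminus w z)) (Cinv (Cmult w (Cmult z z)))).
  { field. split; auto. }
  rewrite E, Cmod_mult, Cmod_mult, Cmod_inv, !Cmod_mult.
  2: { apply Cmult_neq_0; auto. apply Cmult_neq_0; auto. }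
  assert (Hd : 0 <= Cmod (Cminus w z)) by apply Cmod_ge_0.
  assert (Hmw : Cmod z / 2 <= Cmod w) by lra.
  assert (Hp : 0 < Cmod w * (Cmod z * Cmod z)) by (apply Rmult_lt_0_compat; [lra|nra]).
  apply (Rmult_le_reg_r (Cmod w * (Cmod z * Cmod z))); auto.
  rewrite Rmult_assoc, Rinv_l by lra. rewrite Rmult_1_r.
  assert (Cmod (Cminus w z) * Cmod (Cminus w z) <= Cmod (Cminus w z) * (eps * (Cmod z*Cmod z*Cmod z) / 2)) by nra.
  assert (eps * Cmod (Cminus w z) * (Cmod z * Cmod z * Cmod z / 2) <= eps * Cmod (Cminus w z) * (Cmod w * (Cmod z*Cmod z))). { apply Rmult_le_compat_l. nra. nra. }
  nra.
Qed.

Definition Ccont (g : C -> C) (z : C) : Prop :=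
  forall eps : R, 0 < eps -> exists del : R, 0 < del /\
    forall w, Cmod (Cminus w z) < del -> Cmod (Cminus (g w) (g z)) < eps.

Lemma CD_Ccont f z l : CD f z l -> Ccont f z.
Proof.
  intros H eps Heps.
  destruct (H 1 Rlt_0_1) as [d [Hd Hw]].
  exists (Rmin d (eps / (Cmod l + 2))). split.
  { apply Rmin_pos; auto. apply Rdiv_lt_0_compat; auto. pose proof (Cmod_ge_0 l); lra. }
  intros w Hw'. 
  assert (Hw1 : Cmod (Cminus w z) < d) by (eapply Rlt_le_trans; [exact Hw'| apply Rmin_l]).
  assert (Hw2 : Cmod (Cminus w z) < eps / (Cmod l + 2)) by (eapply Rlt_le_trans; [exact Hw'| apply Rmin_r]).
  specialize (Hw w Hw1).
  pose proof (Cmod_triangle (Cminus (Cminus (f w) (f z)) (Cmult l (Cminus w z))) (Cmult l (Cminus w z))).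
  replace (Cplus (Cminus (Cminus (f w) (f z)) (Cmult l (Cminus w z))) (Cmult l (Cminus w z))) with (Cminus (f w) (f z)) in H0 by ring.
  rewrite Cmod_mult in H0.
  pose proof (Cmod_ge_0 l). pose proof (Cmod_ge_0 (Cminus w z)).
  assert (Cmod (Cminus w z) * (Cmod l + 2) < eps).
  { apply (Rmult_lt_compat_r (Cmod l + 2)) in Hw2; [|lra].
    unfold Rdiv in Hw2. rewrite Rmult_assoc, Rinv_l in Hw2 by lra. lra. }
  nra.
Qed.

Lemma isD_Ccont f z l : isD f z l -> Ccont f z.
Proof. intros H; apply (CD_Ccont f z l), isD_CD, H. Qed.

Lemma Ccont_comp f g z : Ccont f (g z) -> Ccont g z -> Ccont (fun w => f (g w)) z.
Proof.
  intros Hf Hg eps Heps. destruct (Hf eps Heps) as [d1 [Hd1 H1]].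
  destruct (Hg d1 Hd1) as [d2 [Hd2 H2]]. exists d2; split; auto.
Qed.

Lemma isD_val f z l l' : isD f z l -> l = l' -> isD f z l'.
Proof. intros H ->; exact H. Qed.

Lemma isD_scal c f z l : isD f z l -> isD (fun w => Cmult c (f w)) z (Cmult c l).
Proof. intros H. eapply isD_val. apply isD_mult. apply isD_const. exact H. rewrite Cmult_0_l, Cplus_0_l. reflexivity. Qed.

Lemma isD_lin a b z : isD (fun w => Cplus a (Cmult b w)) z b.
Proof. eapply isD_val. apply isD_plus. apply isD_const. apply isD_scal. apply isD_id. rewrite Cplus_0_l, Cmult_1_r. reflexivity. Qed.

Lemma dpl_small f x l : derivable_pt_lim f x l ->
  forall eps, 0 < eps -> exists del, 0 < del /\ forall h, Rabs h < del ->
    Rabs (f (x + h) - f x - l * h) <= eps * Rabs h.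
Proof.
  intros H eps Heps. destruct (H eps Heps) as [d Hd].
  exists d. split. apply cond_pos. intros h Hh.
  destruct (Req_dec h 0) as [->|Hn].
  { rewrite Rplus_0_r, Rabs_R0. replace (f x - f x - l * 0) with 0 by ring. rewrite Rabs_R0. lra. }
  specialize (Hd h Hn Hh).
  replace (f (x + h) - f x - l * h) with (((f (x + h) - f x) / h - l) * h) by (field; auto).
  rewrite Rabs_mult. apply Rmult_le_compat_r. apply Rabs_pos. lra.
Qed.

Lemma Cmod_le_sum (x y : R) : Cmod (x, y) <= Rabs x + Rabs y.
Proof.
  unfold Cmod. simpl. pose proof (Rabs_pos x). pose proof (Rabs_pos y).
  rewrite <- (sqrt_Rsqr (Rabs x + Rabs y)) by lra. apply sqrt_le_1_alt.
  pose proof (Rsqr_abs x). pose proof (Rsqr_abs y). unfold Rsqr in *. nra.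
Qed.

Lemma Rabs_fst_le (z : C) : Rabs (fst z) <= Cmod z.
Proof. destruct z as [x y]. unfold Cmod; simpl. rewrite <- sqrt_Rsqr_abs. apply sqrt_le_1_alt. unfold Rsqr. nra. Qed.
Lemma Rabs_snd_le (z : C) : Rabs (snd z) <= Cmod z.
Proof. destruct z as [x y]. unfold Cmod; simpl. rewrite <- sqrt_Rsqr_abs. apply sqrt_le_1_alt. unfold Rsqr. nra. Qed.

Lemma Cexp_add a b : Cexp (Cplus a b) = Cmult (Cexp a) (Cexp b).
Proof.
  destruct a as [a1 a2], b as [b1 b2]. unfold Cexp, Cmult, Cplus; simpl.
  rewrite exp_plus, cos_plus, sin_plus. f_equal; ring.
Qed.

Lemma Cmod_Cexp w : Cmod (Cexp w) = exp (fst w).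
Proof.
  destruct w as [x y]. unfold Cexp, Cmod; simpl.
  replace (exp x * cos y * (exp x * cos y * 1) + exp x * sin y * (exp x * sin y * 1))
    with (exp x * exp x * (sin y ^ 2 + cos y ^ 2)) by ring.
  rewrite <- !Rsqr_pow2, sin2_cos2, Rmult_1_r. apply sqrt_square. pose proof (exp_pos x); lra.
Qed.

Lemma Cexp_neq0 w : Cexp w <> RtoC 0.
Proof. intros H. pose proof (Cmod_Cexp w). rewrite H, Cmod_0 in H0. pose proof (exp_pos (fst w)). lra. Qed.

Lemma CD_Cexp0 : CD Cexp (RtoC 0) (RtoC 1).
Proof.
  intros eps Heps.
  set (e1 := Rmin 1 (eps / 10)).
  assert (He1 : 0 < e1) by (apply Rmin_pos; lra).
  destruct (dpl_small _ _ _ derivable_pt_lim_exp_0 e1 He1) as [d1 [Hd1 H1]].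
  destruct (dpl_small _ _ _ derivable_pt_lim_cos_0 e1 He1) as [d2 [Hd2 H2]].
  destruct (dpl_small _ _ _ derivable_pt_lim_sin_0 e1 He1) as [d3 [Hd3 H3]].
  exists (Rmin (Rmin d1 d2) (Rmin d3 (Rmin 1 (eps / 8)))). split.
  { repeat apply Rmin_pos; lra. }
  intros [a b] Hh.
  replace (Cminus (a, b) (RtoC 0)) with ((a, b) : C) in * by (unfold Cminus, Cplus, Copp, RtoC; simpl; f_equal; ring).
  pose proof (Rabs_fst_le (a, b)) as Ha. pose proof (Rabs_snd_le (a, b)) as Hb. simpl in Ha, Hb.
  set (m := Cmod (a, b)) in *.
  assert (Hd: m < d1 /\ m < d2 /\ m < d3 /\ m < 1 /\ m < eps / 8).
  { pose proof (Rmin_l (Rmin d1 d2) (Rmin d3 (Rmin 1 (eps / 8)))).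
    pose proof (Rmin_r (Rmin d1 d2) (Rmin d3 (Rmin 1 (eps / 8)))).
    pose proof (Rmin_l d1 d2). pose proof (Rmin_r d1 d2).
    pose proof (Rmin_l d3 (Rmin 1 (eps / 8))). pose proof (Rmin_r d3 (Rmin 1 (eps / 8))).
    pose proof (Rmin_l 1 (eps / 8)). pose proof (Rmin_r 1 (eps / 8)). lra. }
  destruct Hd as (Hm1 & Hm2 & Hm3 & Hm4 & Hm5).
  assert (He1a : e1 <= 1) by apply Rmin_l. assert (He1b : e1 <= eps / 10) by apply Rmin_r.
  specialize (H1 a ltac:(lra)). specialize (H2 b ltac:(lra)). specialize (H3 b ltac:(lra)).
  rewrite Rplus_0_l, exp_0 in H1. rewrite Rplus_0_l, cos_0 in H2. rewrite Rplus_0_l, sin_0 in H3.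
  unfold Cexp. simpl fst; simpl snd. rewrite exp_0, cos_0, sin_0.
  replace (Cminus (Cminus (exp a * cos b, exp a * sin b) (1 * 1, 1 * 0)) (Cmult (RtoC 1) (a, b)))
    with (((exp a - 1 - a) + exp a * (cos b - 1)), ((exp a - 1) * sin b + (sin b - b)) : R) 
    by (unfold Cminus, Cplus, Copp, Cmult, RtoC; simpl; f_equal; ring).
  eapply Rle_trans. apply Cmod_le_sum.
  assert (Hea : Rabs (exp a) <= 3).
  { rewrite Rabs_right by (left; apply exp_pos). 
    assert (Rabs (exp a - 1 - 1 * a) <= 1 * 1) by (eapply Rle_trans; [exact H1|]; apply Rmult_le_compat; try lra; apply Rabs_pos).
    pose proof (Rle_abs (exp a - 1 - 1 * a)). pose proof (Rle_abs a). lra. }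
  assert (He1' : Rabs (exp a - 1) <= 2 * Rabs a).
  { replace (exp a - 1) with ((exp a - 1 - 1 * a) + a) by ring.
    eapply Rle_trans. apply Rabs_triang. pose proof (Rabs_pos a).
    assert (e1 * Rabs a <= 1 * Rabs a) by (apply Rmult_le_compat_r; lra). lra. }
  assert (Hs : Rabs (sin b) <= 2 * Rabs b).
  { replace (sin b) with ((sin b - 0 - 1 * b) + b) by ring.
    eapply Rle_trans. apply Rabs_triang. pose proof (Rabs_pos b).
    assert (e1 * Rabs b <= 1 * Rabs b) by (apply Rmult_le_compat_r; lra). lra. }
  replace (cos b - 1) with (cos b - 1 - 0 * b) by ring.
  replace (sin b - b) with (sin b - 0 - 1 * b) by ring.
  replace (exp a - 1 - a) with (exp a - 1 - 1 * a) by ring.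
  pose proof (Rabs_triang (exp a - 1 - 1 * a) (exp a * (cos b - 1 - 0 * b))).
  pose proof (Rabs_triang ((exp a - 1) * sin b) (sin b - 0 - 1 * b)).
  rewrite Rabs_mult in H, H0.
  pose proof (Rabs_pos a). pose proof (Rabs_pos b). pose proof (Rabs_pos (exp a - 1)).
  pose proof (Rabs_pos (sin b)). pose proof (Rabs_pos (cos b - 1 - 0 * b)).
  assert (Rabs (exp a) * Rabs (cos b - 1 - 0 * b) <= 3 * (e1 * Rabs b)) by (apply Rmult_le_compat; auto; apply Rabs_pos).
  assert (Rabs (exp a - 1) * Rabs (sin b) <= (2 * Rabs a) * (2 * Rabs b)) by (apply Rmult_le_compat; auto).
  assert (e1 * Rabs a <= eps / 10 * m) by (apply Rmult_le_compat; lra).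
  assert (e1 * Rabs b <= eps / 10 * m) by (apply Rmult_le_compat; lra).
  assert (Rabs a * Rabs b <= m * (eps / 8)) by (apply Rmult_le_compat; lra).
  lra.
Qed.

Lemma Cexp_0 : Cexp (RtoC 0) = RtoC 1.
Proof. unfold Cexp, RtoC; simpl. rewrite exp_0, cos_0, sin_0. f_equal; ring. Qed.

Lemma CD_scale f z l c : 0 < c -> (forall eps, 0 < eps -> exists del, 0 < del /\ forall w, Cmod (Cminus w z) < del ->
      Cmod (Cminus (Cminus (f w) (f z)) (Cmult l (Cminus w z))) <= c * eps * Cmod (Cminus w z)) -> CD f z l.
Proof.
  intros Hc H eps Heps. destruct (H (eps / c)) as [d [Hd Hw]]. apply Rdiv_lt_0_compat; auto.
  exists d; split; auto. intros w Hw'. specialize (Hw w Hw').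
  replace (c * (eps / c)) with eps in Hw by (field; lra). exact Hw.
Qed.

Lemma isD_Cexp z : isD Cexp z (Cexp z).
Proof.
  apply CD_isD. apply (CD_scale _ _ _ (Cmod (Cexp z) + 1)). pose proof (Cmod_ge_0 (Cexp z)); lra.
  intros eps Heps. destruct (CD_Cexp0 eps Heps) as [d [Hd Hw]].
  exists d; split; auto. intros w Hw'.
  specialize (Hw (Cminus w z)). replace (Cminus (Cminus w z) (RtoC 0)) with (Cminus w z) in Hw by ring.
  specialize (Hw Hw'). rewrite Cexp_0 in Hw.
  replace (Cminus (Cminus (Cexp w) (Cexp z)) (Cmult (Cexp z) (Cminus w z)))
    with (Cmult (Cexp z) (Cminus (Cminus (Cexp (Cminus w z)) (RtoC 1)) (Cmult (RtoC 1) (Cminus w z)))).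
  2: { replace (Cexp w) with (Cexp (Cplus z (Cminus w z))) by (f_equal; ring). rewrite Cexp_add. ring. }
  rewrite Cmod_mult. pose proof (Cmod_ge_0 (Cexp z)). pose proof (Cmod_ge_0 (Cminus w z)).
  pose proof (Cmod_ge_0 (Cminus (Cminus (Cexp (Cminus w z)) (RtoC 1)) (Cmult (RtoC 1) (Cminus w z)))).
  assert (Cmod (Cexp z) * Cmod (Cminus (Cminus (Cexp (Cminus w z)) 1) (Cmult 1 (Cminus w z))) <= Cmod (Cexp z) * (eps * Cmod (Cminus w z))) by (apply Rmult_le_compat_l; auto).
  nra.
Qed.

Lemma Arg_pos (w : C) : 0 < fst w -> Arg w = atan (snd w / fst w).
Proof. intros H. unfold Arg. destruct (Rlt_dec 0 (fst w)); [reflexivity | lra]. Qed.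

Lemma Cmod_pos_re (w : C) : 0 < fst w -> 0 < Cmod w.
Proof. intros H. pose proof (Rabs_fst_le w). rewrite Rabs_right in H0 by lra. lra. Qed.

Lemma Cexp_Clog (w : C) : 0 < fst w -> Cexp (Clog w) = w.
Proof.
  intros H. destruct w as [x y]. simpl in H.
  unfold Cexp, Clog. simpl fst; simpl snd. rewrite Arg_pos by (simpl; lra). simpl.
  assert (Hm : 0 < Cmod (x, y)) by (apply Cmod_pos_re; simpl; lra).
  rewrite exp_ln by auto. rewrite cos_atan, sin_atan.
  assert (E : sqrt (1 + (y / x)²) = Cmod (x, y) / x).
  { assert (E2 : 1 + (y / x)² = (Cmod (x, y) / x)²).
    { unfold Rsqr. replace (Cmod (x, y) / x * (Cmod (x, y) / x)) with ((Cmod (x,y))² / (x * x)) by (unfold Rsqr; field; lra).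
      unfold Cmod. rewrite Rsqr_sqrt by (simpl; nra). simpl. field. lra. }
    rewrite E2. apply sqrt_Rsqr. left. apply Rdiv_lt_0_compat; lra. }
  rewrite E. f_equal; field; split; lra.
Qed.

Lemma ln_lip a b m : 0 < m -> m <= a -> m <= b -> Rabs (ln a - ln b) <= Rabs (a - b) / m.
Proof.
  intros Hm Ha Hb.
  destruct (MVT_abs ln (fun x => / x) b a) as [c [Hc Hcr]].
  { intros c Hc. apply derivable_pt_lim_ln. pose proof (Rmin_glb m b a). 
    assert (m <= Rmin b a) by (apply Rmin_glb; lra). lra. }
  rewrite Hc. assert (Hmc : m <= c) by (assert (m <= Rmin b a) by (apply Rmin_glb; lra); lra).
  rewrite Rabs_right by (left; apply Rinv_0_lt_compat; lra).
  unfold Rdiv. rewrite Rmult_comm. apply Rmult_le_compat_l. apply Rabs_pos.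
  apply Rinv_le_contravar; lra.
Qed.

Lemma atan_lip a b : Rabs (atan a - atan b) <= Rabs (a - b).
Proof.
  destruct (MVT_abs atan (fun x => / (1 + x ^ 2)) b a) as [c [Hc _]].
  { intros c _. apply derivable_pt_lim_atan. }
  rewrite Hc. rewrite <- (Rmult_1_l (Rabs (a - b))) at 2. apply Rmult_le_compat_r. apply Rabs_pos.
  rewrite Rabs_right. 2: { left. apply Rinv_0_lt_compat. nra. }
  rewrite <- Rinv_1. apply Rinv_le_contravar. lra. nra.
Qed.

Lemma Clog_lip (w0 : C) : 0 < fst w0 -> exists L d0, 0 < L /\ 0 < d0 /\
  forall w, Cmod (Cminus w w0) < d0 -> 0 < fst w /\ Cmod (Cminus (Clog w) (Clog w0)) <= L * Cmod (Cminus w w0).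
Proof.
  intros H. destruct w0 as [x0 y0]. simpl in H.
  assert (Hm : 0 < Cmod (x0, y0)) by (apply Cmod_pos_re; simpl; lra).
  exists (2 / Cmod (x0, y0) + 2 * (x0 + Rabs y0) / (x0 * x0)), (x0 / 2).
  split. { pose proof (Rabs_pos y0). apply Rplus_lt_0_compat; apply Rdiv_lt_0_compat; nra. }
  split. lra.
  intros [x y] Hw.
  pose proof (Rabs_fst_le (Cminus (x, y) (x0, y0))) as Hx. pose proof (Rabs_snd_le (Cminus (x, y) (x0, y0))) as Hy.
  simpl in Hx, Hy.
  set (d := Cmod (Cminus (x, y) (x0, y0))) in *.
  assert (Hxx : x0 / 2 < x). { pose proof (Rle_abs (-(x + - x0))). rewrite Rabs_Ropp in H0. lra. }
  split. simpl; lra.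
  unfold Clog. rewrite !Arg_pos by (simpl; lra). simpl fst; simpl snd.
  unfold Cminus at 1, Cplus, Copp. simpl.
  eapply Rle_trans. apply Cmod_le_sum.
  rewrite Rmult_plus_distr_r.
  apply Rplus_le_compat.
  - replace (ln (Cmod (x, y)) + - ln (Cmod (x0, y0))) with (ln (Cmod (x, y)) - ln (Cmod (x0, y0))) by ring.
    pose proof (Cmod_sub_ge (x, y) (x0, y0)). pose proof (Cmod_sub_le (x, y) (x0, y0)). fold d in H0, H1.
    assert (Hd2 : d < Cmod (x0, y0) / 2). { pose proof (Rabs_fst_le (x0, y0)). simpl in H2. rewrite Rabs_right in H2 by lra. lra. }
    eapply Rle_trans. apply (ln_lip _ _ (Cmod (x0, y0) / 2)). lra. lra. lra.
    unfold Rdiv at 1. rewrite Rinv_div.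
    assert (Rabs (Cmod (x, y) - Cmod (x0, y0)) <= d) by (apply Rabs_le; lra).
    replace (2 / Cmod (x0, y0) * d) with (d * (2 / Cmod (x0, y0))) by ring.
    apply Rmult_le_compat_r. left; apply Rdiv_lt_0_compat; lra. exact H2.
  - eapply Rle_trans. apply atan_lip.
    replace (y / x - y0 / x0) with (((y + - y0) * x0 - y0 * (x + - x0)) / (x * x0)) by (field; lra).
    unfold Rdiv. rewrite Rabs_mult, Rabs_inv, (Rabs_right (x * x0)) by nra.
    assert (Hn : Rabs ((y + - y0) * x0 - y0 * (x + - x0)) <= d * (x0 + Rabs y0)).
    { eapply Rle_trans. apply Rabs_triang. rewrite Rabs_Ropp, !Rabs_mult, (Rabs_right x0) by lra.
      pose proof (Rabs_pos y0). nra. }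
    assert (Hi : / (x * x0) <= 2 / (x0 * x0)).
    { replace (2 / (x0 * x0)) with (/ (x0 / 2 * x0)) by (field; lra). apply Rinv_le_contravar; nra. }
    pose proof (Rabs_pos ((y + - y0) * x0 - y0 * (x + - x0))). pose proof (Rabs_pos y0).
    assert (0 <= d) by apply Cmod_ge_0.
    apply Rle_trans with ((d * (x0 + Rabs y0)) * (2 / (x0 * x0))).
    apply Rmult_le_compat; auto. left; apply Rinv_0_lt_compat; nra.
    right. field. lra.
Qed.

Lemma CD_Clog (w0 : C) : 0 < fst w0 -> CD Clog w0 (Cinv w0).
Proof.
  intros H. destruct (Clog_lip w0 H) as (L & d0 & HL & Hd0 & Hlip).
  assert (Hw0 : w0 <> RtoC 0). { intros E. rewrite E in H. simpl in H. lra. }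
  assert (Hm : 0 < Cmod w0) by (apply Cmod_gt_0; auto).
  pose proof (isD_CD _ _ _ (isD_Cexp (Clog w0))) as HE. rewrite Cexp_Clog in HE by auto.
  intros eps Heps.
  destruct (HE (eps * Cmod w0 / L)) as [d1 [Hd1 H1]].
  { apply Rdiv_lt_0_compat; auto. nra. }
  exists (Rmin d0 (d1 / L)). split. apply Rmin_pos; auto. apply Rdiv_lt_0_compat; auto.
  intros w Hw.
  assert (Hwa : Cmod (Cminus w w0) < d0) by (eapply Rlt_le_trans; [exact Hw | apply Rmin_l]).
  assert (Hwb : Cmod (Cminus w w0) < d1 / L) by (eapply Rlt_le_trans; [exact Hw | apply Rmin_r]).
  destruct (Hlip w Hwa) as [Hre Hl].
  assert (Hu : Cmod (Cminus (Clog w) (Clog w0)) < d1).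
  { eapply Rle_lt_trans. exact Hl. apply (Rmult_lt_compat_l L) in Hwb; auto.
    replace (L * (d1 / L)) with d1 in Hwb by (field; lra). exact Hwb. }
  specialize (H1 _ Hu). rewrite !Cexp_Clog in H1 by auto.
  replace (Cminus (Cminus (Clog w) (Clog w0)) (Cmult (Cinv w0) (Cminus w w0)))
    with (Cmult (Copp (Cinv w0)) (Cminus (Cminus w w0) (Cmult w0 (Cminus (Clog w) (Clog w0))))) by (field; auto).
  rewrite Cmod_mult, Cmod_opp, Cmod_inv by auto.
  pose proof (Cmod_ge_0 (Cminus (Cminus w w0) (Cmult w0 (Cminus (Clog w) (Clog w0))))).
  apply (Rmult_le_reg_l (Cmod w0)); auto. rewrite <- Rmult_assoc, Rinv_r, Rmult_1_l by lra.
  eapply Rle_trans. exact H1.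
  pose proof (Cmod_ge_0 (Cminus (Clog w) (Clog w0))).
  apply Rle_trans with (eps * Cmod w0 / L * (L * Cmod (Cminus w w0))).
  apply Rmult_le_compat_l; auto. left. apply Rdiv_lt_0_compat; nra.
  right. field. lra.
Qed.

Definition Pw (beta : R) (w : C) : C := Defs.Cpow (Cminus (RtoC 1) w) beta.

Lemma in_disc_re (w : C) : in_disc w -> 0 < fst (Cminus (RtoC 1) w).
Proof.
  intros H. unfold in_disc in H. pose proof (Rabs_fst_le w). simpl.
  pose proof (Rle_abs (fst w)). lra.
Qed.

Lemma isD_Pw beta w : in_disc w ->
  isD (Pw beta) w (Cmult (Cmult (RtoC beta) (Cmult (Copp (RtoC 1)) (Cinv (Cminus (RtoC 1) w)))) (Pw beta w)).
Proof.
  intros H. unfold Pw, Defs.Cpow.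
  apply (isD_comp Cexp (fun w => Cmult (RtoC beta) (Clog (Cminus (RtoC 1) w)))).
  apply isD_Cexp.
  apply isD_scal.
  apply (isD_comp Clog (fun w => Cminus (RtoC 1) w)). apply CD_isD, CD_Clog, in_disc_re, H.
  apply isD_ext with (fun w => Cplus (RtoC 1) (Cmult (Copp (RtoC 1)) w)). intros; ring.
  apply isD_lin.
Qed.

Lemma Pw_neq0 beta w : Pw beta w <> RtoC 0.
Proof. apply Cexp_neq0. Qed.

Lemma Cmod_Pw beta w : Cmod (Pw beta w) = exp (beta * ln (Cmod (Cminus (RtoC 1) w))).
Proof. unfold Pw, Defs.Cpow. rewrite Cmod_Cexp. unfold Clog. simpl. f_equal. ring. Qed.

Lemma Pw_0 beta : Pw beta (RtoC 0) = RtoC 1.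
Proof.
  unfold Pw, Defs.Cpow, Clog. replace (Cminus (RtoC 1) (RtoC 0)) with (RtoC 1) by ring.
  rewrite Cmod_1, ln_1. rewrite Arg_pos by (simpl; lra). simpl. 
  replace (0 / 1) with 0 by field. rewrite atan_0.
  replace (Cmult (RtoC beta) (0, 0)) with (RtoC 0) by (unfold Cmult, RtoC; simpl; f_equal; ring).
  apply Cexp_0.
Qed.

Definition gf (beta : R) (f : C -> C) (w : C) : C :=
  if Ceq_dec w (RtoC 0) then C_derive f (RtoC 0) else Cdiv (f w) (Cmult w (Pw beta w)).

Lemma analytic_isD f w : analytic_disc f -> in_disc w -> isD f w (C_derive f w).
Proof.
  intros Ha Hw. destruct (Ha w Hw) as [l Hl].
  rewrite (is_C_derive_unique f w l Hl). apply isD_derive. exact Hl.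
Qed.

Lemma gf_isD beta f w : analytic_disc f -> in_disc w -> w <> RtoC 0 -> exists l, isD (gf beta f) w l.
Proof.
  intros Ha Hw Hw0.
  eexists. eapply isD_ext_loc.
  { exists (Cmod w). split. apply Cmod_gt_0; auto. intros u Hu.
    assert (u <> RtoC 0). { intros ->. replace (Cminus (RtoC 0) w) with (Copp w) in Hu by ring. rewrite Cmod_opp in Hu. lra. }
    unfold gf. destruct (Ceq_dec u (RtoC 0)) as [E|E]. contradiction. 
    instantiate (1 := fun u => Cmult (f u) (Cinv (Cmult u (Pw beta u)))). reflexivity. }
  simpl. apply isD_mult. apply analytic_isD; auto.
  apply (isD_comp Cinv (fun u => Cmult u (Pw beta u))).
  apply isD_inv. apply Cmult_neq_0; auto. apply Pw_neq0.
  apply isD_mult. apply isD_id. apply isD_Pw; auto.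
Qed.

Lemma gf_cont0 beta f : analytic_disc f -> f (RtoC 0) = RtoC 0 -> Ccont (gf beta f) (RtoC 0).
Proof.
  intros Ha Hf0.
  assert (H0 : in_disc (RtoC 0)) by (unfold in_disc; rewrite Cmod_0; lra).
  set (l := C_derive f (RtoC 0)).
  pose proof (isD_CD _ _ _ (analytic_isD f _ Ha H0)) as Hf. fold l in Hf.
  assert (HQ : Ccont (fun u => Cinv (Pw beta u)) (RtoC 0)).
  { eapply isD_Ccont. apply (isD_comp Cinv (Pw beta)). apply isD_inv, Pw_neq0. apply isD_Pw, H0. }
  unfold Ccont in HQ. rewrite Pw_0 in HQ.
  intros eps Heps.
  assert (Hl : 0 <= Cmod l) by apply Cmod_ge_0.
  destruct (HQ (Rmin 1 (eps / (2 * (Cmod l + 1))))) as [d1 [Hd1 H1]].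
  { apply Rmin_pos. lra. apply Rdiv_lt_0_compat; lra. }
  destruct (Hf (eps / 8)) as [d2 [Hd2 H2]]. lra.
  exists (Rmin d1 d2). split. apply Rmin_pos; auto.
  intros w Hw. 
  assert (Hw1 : Cmod (Cminus w (RtoC 0)) < d1) by (eapply Rlt_le_trans; [exact Hw | apply Rmin_l]).
  assert (Hw2 : Cmod (Cminus w (RtoC 0)) < d2) by (eapply Rlt_le_trans; [exact Hw | apply Rmin_r]).
  specialize (H1 w Hw1). specialize (H2 w Hw2).
  replace (Cminus w (RtoC 0)) with w in * by ring.
  replace (Cinv (RtoC 1)) with (RtoC 1) in H1 by (field). rewrite Hf0 in H2.
  unfold gf. destruct (Ceq_dec (RtoC 0) (RtoC 0)) as [_|E]; [|congruence].
  destruct (Ceq_dec w (RtoC 0)) as [->|Hw0].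
  { fold l. replace (Cminus l l) with (RtoC 0) by ring. rewrite Cmod_0. lra. }
  fold l.
  assert (HP := Pw_neq0 beta w).
  replace (Cminus (Cdiv (f w) (Cmult w (Pw beta w))) l)
    with (Cplus (Cmult (Cmult (Cminus (Cminus (f w) (RtoC 0)) (Cmult l w)) (Cinv w)) (Cinv (Pw beta w)))
                (Cmult l (Cminus (Cinv (Pw beta w)) (RtoC 1)))) by (field; auto).
  eapply Rle_lt_trans. apply Cmod_triangle. rewrite !Cmod_mult, Cmod_inv by auto.
  assert (Hm : 0 < Cmod w) by (apply Cmod_gt_0; auto).
  assert (Hq1 : Cmod (Cminus (Cinv (Pw beta w)) (RtoC 1)) < 1) by (eapply Rlt_le_trans; [exact H1 | apply Rmin_l]).
  assert (Hq2 : Cmod (Cminus (Cinv (Pw beta w)) (RtoC 1)) < eps / (2 * (Cmod l + 1))) by (eapply Rlt_le_trans; [exact H1 | apply Rmin_r]).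
  assert (HQ2 : Cmod (Cinv (Pw beta w)) <= 2).
  { pose proof (Cmod_sub_le (Cinv (Pw beta w)) (RtoC 1)). rewrite Cmod_1 in H. lra. }
  assert (T1 : Cmod (Cminus (Cminus (f w) (RtoC 0)) (Cmult l w)) * / Cmod w <= eps / 8).
  { apply (Rmult_le_reg_r (Cmod w)); auto. rewrite Rmult_assoc, Rinv_l, Rmult_1_r by lra. exact H2. }
  assert (T2 : Cmod l * Cmod (Cminus (Cinv (Pw beta w)) (RtoC 1)) <= eps / 2).
  { apply Rle_trans with ((Cmod l + 1) * (eps / (2 * (Cmod l + 1)))).
    apply Rmult_le_compat; try lra. apply Cmod_ge_0. right. field. lra. }
  pose proof (Cmod_ge_0 (Cminus (Cminus (f w) (RtoC 0)) (Cmult l w))).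
  pose proof (Cmod_ge_0 (Cinv (Pw beta w))).
  assert (Cmod (Cminus (Cminus (f w) (RtoC 0)) (Cmult l w)) * / Cmod w * Cmod (Cinv (Pw beta w)) <= eps / 8 * 2).
  { apply Rmult_le_compat; auto. apply Rmult_le_pos; auto. left; apply Rinv_0_lt_compat; auto. }
  lra.
Qed.

Lemma gf_cont beta f w : analytic_disc f -> f (RtoC 0) = RtoC 0 -> in_disc w -> Ccont (gf beta f) w.
Proof.
  intros Ha Hf0 Hw. destruct (Ceq_dec w (RtoC 0)) as [->|Hn]. apply gf_cont0; auto.
  destruct (gf_isD beta f w Ha Hw Hn) as [l Hl]. eapply isD_Ccont; eauto.
Qed.

Notation CV := C_R_CompleteNormedModule.

Lemma norm_CR (x : C) : @norm R_AbsRing C_R_NormedModule x = Cmod x.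
Proof.
  change (sqrt (Rabs (fst x) ^ 2 + Rabs (snd x) ^ 2) = Cmod x). unfold Cmod.
  rewrite !pow2_abs. reflexivity.
Qed.

Lemma Rcont_C (h : R -> C) (t : R) :
  (forall eps, 0 < eps -> exists del, 0 < del /\ forall s, Rabs (s - t) < del -> Cmod (Cminus (h s) (h t)) < eps) ->
  @continuous R_UniformSpace (NormedModule.UniformSpace R_AbsRing C_R_NormedModule) h t.
Proof.
  intros H P HP.
  apply locally_C in HP. destruct HP as [e He].
  destruct (H e (cond_pos e)) as [d [Hd Hs]].
  exists (mkposreal d Hd). intros s Hst. apply He. apply Hs. exact Hst.
Qed.

Definition segF (g : C -> C) (a b : C) (t : R) : C :=
  Cmult (g (Cplus a (Cmult (RtoC t) (Cminus b a)))) (Cminus b a).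

Definition seg (g : C -> C) (a b : C) : C := @RInt CV (segF g a b) 0 1.

Definition SegCont (g : C -> C) (a b : C) : Prop :=
  forall t, 0 <= t <= 1 -> Ccont g (Cplus a (Cmult (RtoC t) (Cminus b a))).

Lemma Cmod_RtoC_mult (t : R) (z : C) : Cmod (Cmult (RtoC t) z) = Rabs t * Cmod z.
Proof. rewrite Cmod_mult, Cmod_R. reflexivity. Qed.

Lemma segF_cont g a b t : Ccont g (Cplus a (Cmult (RtoC t) (Cminus b a))) ->
  @continuous R_UniformSpace (NormedModule.UniformSpace R_AbsRing C_R_NormedModule) (segF g a b) t.
Proof.
  intros Hg. apply Rcont_C. intros eps Heps.
  set (m := Cmod (Cminus b a)).
  assert (Hm : 0 <= m) by apply Cmod_ge_0.
  destruct (Hg (eps / (m + 1))) as [d [Hd H]]. apply Rdiv_lt_0_compat; lra.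
  exists (d / (m + 1)). split. apply Rdiv_lt_0_compat; lra.
  intros s Hs. unfold segF.
  replace (Cminus (Cmult (g (Cplus a (Cmult (RtoC s) (Cminus b a)))) (Cminus b a))
                  (Cmult (g (Cplus a (Cmult (RtoC t) (Cminus b a)))) (Cminus b a)))
    with (Cmult (Cminus (g (Cplus a (Cmult (RtoC s) (Cminus b a)))) (g (Cplus a (Cmult (RtoC t) (Cminus b a))))) (Cminus b a)) by ring.
  rewrite Cmod_mult. fold m.
  assert (Hc : Cmod (Cminus (Cplus a (Cmult (RtoC s) (Cminus b a))) (Cplus a (Cmult (RtoC t) (Cminus b a)))) < d).
  { replace (Cminus (Cplus a (Cmult (RtoC s) (Cminus b a))) (Cplus a (Cmult (RtoC t) (Cminus b a))))
      with (Cmult (RtoC (s - t)) (Cminus b a)) by (rewrite RtoC_minus; ring).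
    rewrite Cmod_RtoC_mult. fold m.
    apply Rle_lt_trans with (Rabs (s - t) * (m + 1)). apply Rmult_le_compat_l. apply Rabs_pos. lra.
    apply (Rmult_lt_compat_r (m + 1)) in Hs; [|lra]. replace (d / (m + 1) * (m + 1)) with d in Hs by (field; lra). exact Hs. }
  specialize (H _ Hc).
  pose proof (Cmod_ge_0 (Cminus (g (Cplus a (Cmult (RtoC s) (Cminus b a)))) (g (Cplus a (Cmult (RtoC t) (Cminus b a)))))).
  apply Rle_lt_trans with (eps / (m + 1) * m).
  apply Rmult_le_compat_r; lra.
  apply Rlt_le_trans with (eps / (m + 1) * (m + 1)). apply Rmult_lt_compat_l. apply Rdiv_lt_0_compat; lra. lra.
  right; field; lra.
Qed.

Lemma segF_ex g a b : SegCont g a b -> ex_RInt (V := CV) (segF g a b) 0 1.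
Proof.
  intros H. apply ex_RInt_continuous. intros z Hz.
  rewrite Rmin_left, Rmax_right in Hz by lra. apply segF_cont, H, Hz.
Qed.

Lemma seg_is g a b : SegCont g a b -> is_RInt (V := CV) (segF g a b) 0 1 (seg g a b).
Proof. intros H. apply (RInt_correct (V := CV)), segF_ex, H. Qed.

Lemma Ccont_eq g p q : p = q -> Ccont g p -> Ccont g q.
Proof. intros ->; auto. Qed.

Lemma SegCont_sub g a b u v : SegCont g a b -> 0 <= u <= 1 -> 0 <= v <= 1 ->
  SegCont g (Cplus a (Cmult (RtoC u) (Cminus b a))) (Cplus a (Cmult (RtoC v) (Cminus b a))).
Proof.
  intros H Hu Hv t Ht. 
  apply Ccont_eq with (Cplus a (Cmult (RtoC (u + t * (v - u))) (Cminus b a))).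
  rewrite RtoC_plus, RtoC_mult, RtoC_minus. ring.
  apply H. split. 
  - destruct (Rle_dec u v). nra. nra.
  - destruct (Rle_dec u v). nra. nra.
Qed.

Lemma seg_split g a b (l : R) : SegCont g a b -> 0 <= l <= 1 ->
  seg g a b = Cplus (seg g a (Cplus a (Cmult (RtoC l) (Cminus b a)))) (seg g (Cplus a (Cmult (RtoC l) (Cminus b a))) b).
Proof.
  intros H Hl. set (m := Cplus a (Cmult (RtoC l) (Cminus b a))).
  pose proof (segF_ex g a b H) as Hex.
  assert (Ex1 : ex_RInt (V:=CV) (segF g a b) 0 l) by (apply (ex_RInt_Chasles_1 (V:=CV)) with 1; auto).
  assert (Ex2 : ex_RInt (V:=CV) (segF g a b) l 1) by (apply (ex_RInt_Chasles_2 (V:=CV)) with 0; auto).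
  assert (I1 : seg g a m = RInt (V:=CV) (segF g a b) 0 l).
  { unfold seg. apply (is_RInt_unique (V:=CV)).
    apply (is_RInt_ext (V:=CV)) with (fun t => scal l (segF g a b (l * t + 0))).
    { intros t _. rewrite scal_R_Cmult. match goal with |- ?x = ?y => change (@eq C x y) end. unfold segF, m.
      replace (Cplus a (Cmult (RtoC t) (Cminus (Cplus a (Cmult (RtoC l) (Cminus b a))) a)))
        with (Cplus a (Cmult (RtoC (l * t + 0)) (Cminus b a))) by (rewrite RtoC_plus, RtoC_mult; ring).
      ring. }
    apply (is_RInt_comp_lin (V:=CV)). replace (l * 0 + 0) with 0 by ring. replace (l * 1 + 0) with l by ring.
    apply (RInt_correct (V:=CV)). exact Ex1. }
  assert (I2 : seg g m b = RInt (V:=CV) (segF g a b) l 1).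
  { unfold seg. apply (is_RInt_unique (V:=CV)).
    apply (is_RInt_ext (V:=CV)) with (fun t => scal (1 - l) (segF g a b ((1 - l) * t + l))).
    { intros t _. rewrite scal_R_Cmult. match goal with |- ?x = ?y => change (@eq C x y) end. unfold segF, m.
      replace (Cplus (Cplus a (Cmult (RtoC l) (Cminus b a))) (Cmult (RtoC t) (Cminus b (Cplus a (Cmult (RtoC l) (Cminus b a))))))
        with (Cplus a (Cmult (RtoC ((1 - l) * t + l)) (Cminus b a))) by (rewrite RtoC_plus, RtoC_mult, RtoC_minus; ring).
      rewrite RtoC_minus. ring. }
    apply (is_RInt_comp_lin (V:=CV)). replace ((1 - l) * 0 + l) with l by ring. replace ((1 - l) * 1 + l) with 1 by ring.
    apply (RInt_correct (V:=CV)). exact Ex2. }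
  rewrite I1, I2. unfold seg. symmetry. apply (RInt_Chasles (V:=CV)); auto.
Qed.

Lemma seg_rev g a b : SegCont g a b -> seg g b a = Copp (seg g a b).
Proof.
  intros H. pose proof (segF_ex g a b H) as Hex.
  unfold seg. apply (is_RInt_unique (V:=CV)).
  apply (is_RInt_ext (V:=CV)) with (fun t => scal (- (1)) (segF g a b (- (1) * t + 1))).
  { intros t _. rewrite scal_R_Cmult. match goal with |- ?x = ?y => change (@eq C x y) end. unfold segF.
    replace (Cplus b (Cmult (RtoC t) (Cminus a b))) with (Cplus a (Cmult (RtoC (- (1) * t + 1)) (Cminus b a)))
      by (rewrite RtoC_plus, RtoC_mult, RtoC_opp; ring).
    rewrite RtoC_opp. ring. }
  apply (is_RInt_comp_lin (V:=CV)). replace (- (1) * 0 + 1) with 1 by ring. replace (- (1) * 1 + 1) with 0 by ring.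
  apply (is_RInt_swap (V:=CV)). apply (RInt_correct (V:=CV)). exact Hex.
Qed.

Lemma is_RInt_val (f : R -> C) a b (l l' : C) : is_RInt (V:=CV) f a b l -> l = l' -> is_RInt (V:=CV) f a b l'.
Proof. intros H ->; exact H. Qed.

Lemma seg_bound g a b M : SegCont g a b ->
  (forall t, 0 <= t <= 1 -> Cmod (g (Cplus a (Cmult (RtoC t) (Cminus b a)))) <= M) ->
  Cmod (seg g a b) <= M * Cmod (Cminus b a).
Proof.
  intros H HM. rewrite <- norm_CR.
  pose proof (norm_RInt_le_const (V:=C_R_NormedModule) (segF g a b) 0 1 (seg g a b) (M * Cmod (Cminus b a))) as K.
  replace (M * Cmod (Cminus b a)) with ((1 - 0) * (M * Cmod (Cminus b a))) by ring.
  apply K. lra.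
  intros t Ht. rewrite norm_CR. unfold segF. rewrite Cmod_mult. apply Rmult_le_compat_r. apply Cmod_ge_0. apply HM; auto.
  apply seg_is, H.
Qed.

Lemma Ccont_minus_const g c p : Ccont g p -> Ccont (fun w => Cminus (g w) c) p.
Proof.
  intros H eps Heps. destruct (H eps Heps) as [d [Hd Hw]]. exists d; split; auto.
  intros w Hw'. replace (Cminus (Cminus (g w) c) (Cminus (g p) c)) with (Cminus (g w) (g p)) by ring. auto.
Qed.

Lemma SegCont_minus_const g c a b : SegCont g a b -> SegCont (fun w => Cminus (g w) c) a b.
Proof. intros H t Ht. apply Ccont_minus_const, H, Ht. Qed.

Lemma seg_minus_const g c a b : SegCont g a b ->
  seg (fun w => Cminus (g w) c) a b = Cminus (seg g a b) (Cmult c (Cminus b a)).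
Proof.
  intros H. unfold seg. apply (is_RInt_unique (V:=CV)).
  apply (is_RInt_ext (V:=CV)) with (fun t => minus (segF g a b t) (Cmult c (Cminus b a))).
  { intros t _. unfold segF. match goal with |- ?x = ?y => change (@eq C x y) end.
    change (Cminus (Cmult (g (Cplus a (Cmult (RtoC t) (Cminus b a)))) (Cminus b a)) (Cmult c (Cminus b a)) =
            Cmult (Cminus (g (Cplus a (Cmult (RtoC t) (Cminus b a)))) c) (Cminus b a)). ring. }
  eapply is_RInt_val. apply (is_RInt_minus (V:=CV)). apply (RInt_correct (V:=CV)), segF_ex, H.
  apply (is_RInt_const (V:=CV)).
  rewrite scal_R_Cmult. change (Cminus (RInt (V:=CV) (segF g a b) 0 1) (Cmult (RtoC (1 - 0)) (Cmult c (Cminus b a))) =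
       Cminus (RInt (V:=CV) (segF g a b) 0 1) (Cmult c (Cminus b a))). replace (1 - 0) with 1 by ring. ring.
Qed.

Lemma real_limit (x : nat -> R) (q : nat -> R) :
  (forall n m, (n <= m)%nat -> Rabs (x m - x n) <= q n) ->
  (forall eps, 0 < eps -> exists N, forall n, (N <= n)%nat -> q n < eps) ->
  exists l, forall n, Rabs (l - x n) <= q n.
Proof.
  intros H Hq.
  assert (Hc : Cauchy_crit x).
  { intros eps Heps. destruct (Hq eps Heps) as [N HN]. exists N. intros n m Hn Hm.
    unfold Rdist. destruct (Compare_dec.le_lt_dec n m) as [L|L].
    - rewrite <- Rabs_Ropp. replace (- (x n - x m)) with (x m - x n) by ring.
      eapply Rle_lt_trans. apply H; auto. apply HN; auto.
    - eapply Rle_lt_trans. apply H; lia. apply HN; auto. }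
  destruct (Rcomplete.R_complete x Hc) as [l Hl].
  exists l. intros n. apply Rle_plus_epsilon. intros eps Heps.
  destruct (Hl eps Heps) as [N HN].
  specialize (HN (Nat.max N n) ltac:(lia)). unfold Rdist in HN.
  specialize (H n (Nat.max N n) ltac:(lia)).
  replace (l - x n) with ((x (Nat.max N n) - x n) - (x (Nat.max N n) - l)) by ring.
  eapply Rle_trans. apply Rabs_triang. rewrite Rabs_Ropp. lra.
Qed.

Lemma complex_limit (a : nat -> C) (q : nat -> R) :
  (forall n m, (n <= m)%nat -> Cmod (Cminus (a m) (a n)) <= q n) ->
  (forall eps, 0 < eps -> exists N, forall n, (N <= n)%nat -> q n < eps) ->
  exists p, forall n, Cmod (Cminus p (a n)) <= 2 * q n.
Proof.
  intros H Hq.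
  destruct (real_limit (fun n => fst (a n)) q) as [x Hx]; auto.
  { intros n m Hnm. eapply Rle_trans; [|apply (H n m Hnm)].
    pose proof (Rabs_fst_le (Cminus (a m) (a n))). simpl in H0. exact H0. }
  destruct (real_limit (fun n => snd (a n)) q) as [y Hy]; auto.
  { intros n m Hnm. eapply Rle_trans; [|apply (H n m Hnm)].
    pose proof (Rabs_snd_le (Cminus (a m) (a n))). simpl in H0. exact H0. }
  exists (x, y). intros n. specialize (Hx n). specialize (Hy n).
  unfold Cminus, Cplus, Copp. simpl. eapply Rle_trans. apply Cmod_le_sum. unfold Rminus in Hx, Hy. lra.
Qed.

Lemma half_pow_small (p : R) : forall eps, 0 < eps -> exists N, forall n, (N <= n)%nat -> p * (/ 2) ^ n < eps.
Proof.
  intros eps Heps.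
  destruct (pow_lt_1_zero (/ 2) ltac:(rewrite Rabs_right; lra) (eps / (Rabs p + 1))) as [N HN].
  apply Rdiv_lt_0_compat; auto. pose proof (Rabs_pos p); lra.
  exists N. intros n Hn. specialize (HN n Hn).
  rewrite Rabs_right in HN by (left; apply pow_lt; lra).
  pose proof (Rabs_pos p). pose proof (Rle_abs p).
  assert (0 < (/ 2) ^ n) by (apply pow_lt; lra).
  apply Rle_lt_trans with ((Rabs p + 1) * (/ 2) ^ n). nra.
  apply (Rmult_lt_compat_l (Rabs p + 1)) in HN; [|lra].
  replace ((Rabs p + 1) * (eps / (Rabs p + 1))) with eps in HN by (field; lra). exact HN.
Qed.

Lemma is_RInt_t_c (c : C) : is_RInt (V:=CV) (fun t => scal t c) 0 1 (scal (/ 2) c).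
Proof.
  eapply is_RInt_val.
  apply (is_RInt_derive (V:=CV) (fun t => scal (t * t / 2) c) (fun t => scal t c)).
  - intros x _. apply (is_derive_scal_l (K:=R_AbsRing) (V:=C_R_NormedModule) (fun t => t * t / 2) x x c).
    auto_derive. auto. field.
  - intros x _. apply (continuous_scal_l (U:=R_UniformSpace) (K:=R_AbsRing) (V:=C_R_NormedModule) (fun t => t) c x). apply continuous_id.
  - rewrite !scal_R_Cmult. change (Cminus (Cmult (RtoC (1 * 1 / 2)) c) (Cmult (RtoC (0 * 0 / 2)) c) = Cmult (RtoC (/ 2)) c).
    replace (1 * 1 / 2) with (/ 2) by field. replace (0 * 0 / 2) with 0 by field. ring.
Qed.

Definition tri (g : C -> C) (a b c : C) : C := Cplus (Cplus (seg g a b) (seg g b c)) (seg g c a).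

Lemma seg_affine al l u v :
  seg (fun w => Cplus al (Cmult l w)) u v =
  Cplus (Cmult (Cplus al (Cmult l u)) (Cminus v u)) (Cmult (RtoC (/ 2)) (Cmult l (Cmult (Cminus v u) (Cminus v u)))).
Proof.
  unfold seg. apply (is_RInt_unique (V:=CV)).
  apply (is_RInt_ext (V:=CV)) with (fun t : R => (plus (Cmult (Cplus al (Cmult l u)) (Cminus v u) : CV) (scal t (Cmult l (Cmult (Cminus v u) (Cminus v u)) : CV)) : CV)).
  { intros t _. rewrite scal_R_Cmult. unfold segF. match goal with |- ?x = ?y => change (@eq C x y) end.
    change (Cplus (Cmult (Cplus al (Cmult l u)) (Cminus v u)) (Cmult (RtoC t) (Cmult l (Cmult (Cminus v u) (Cminus v u)))) =
      Cmult (Cplus al (Cmult l (Cplus u (Cmult (RtoC t) (Cminus v u))))) (Cminus v u)). ring. }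
  eapply is_RInt_val. apply (is_RInt_plus (V:=CV)). apply (is_RInt_const (V:=CV)). apply is_RInt_t_c.
  rewrite !scal_R_Cmult. change (Cplus (Cmult (RtoC (1 - 0)) (Cmult (Cplus al (Cmult l u)) (Cminus v u))) (Cmult (RtoC (/ 2)) (Cmult l (Cmult (Cminus v u) (Cminus v u)))) =
    Cplus (Cmult (Cplus al (Cmult l u)) (Cminus v u)) (Cmult (RtoC (/ 2)) (Cmult l (Cmult (Cminus v u) (Cminus v u))))).
  replace (1 - 0) with 1 by ring. ring.
Qed.

Lemma tri_affine al l a b c : tri (fun w => Cplus al (Cmult l w)) a b c = RtoC 0.
Proof. unfold tri. rewrite !seg_affine. rewrite RtoC_inv by lra. field. Qed.

Lemma Ccont_minus g1 g2 p : Ccont g1 p -> Ccont g2 p -> Ccont (fun w => Cminus (g1 w) (g2 w)) p.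
Proof.
  intros H1 H2 eps Heps. destruct (H1 (eps/2)) as [d1 [Hd1 K1]]. lra. destruct (H2 (eps/2)) as [d2 [Hd2 K2]]. lra.
  exists (Rmin d1 d2). split. apply Rmin_pos; auto. intros w Hw.
  assert (A1 := K1 w (Rlt_le_trans _ _ _ Hw (Rmin_l _ _))). assert (A2 := K2 w (Rlt_le_trans _ _ _ Hw (Rmin_r _ _))).
  replace (Cminus (Cminus (g1 w) (g2 w)) (Cminus (g1 p) (g2 p))) with (Cminus (Cminus (g1 w) (g1 p)) (Cminus (g2 w) (g2 p))) by ring.
  eapply Rle_lt_trans. unfold Cminus at 1. apply Cmod_triangle. rewrite Cmod_opp. lra.
Qed.

Lemma seg_minus g1 g2 a b : SegCont g1 a b -> SegCont g2 a b ->
  seg (fun w => Cminus (g1 w) (g2 w)) a b = Cminus (seg g1 a b) (seg g2 a b).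
Proof.
  intros H1 H2. unfold seg. apply (is_RInt_unique (V:=CV)).
  apply (is_RInt_ext (V:=CV)) with (fun t : R => (minus (segF g1 a b t : CV) (segF g2 a b t : CV) : CV)).
  { intros t _. unfold segF. match goal with |- ?x = ?y => change (@eq C x y) end.
    change (Cminus (Cmult (g1 (Cplus a (Cmult (RtoC t) (Cminus b a)))) (Cminus b a)) (Cmult (g2 (Cplus a (Cmult (RtoC t) (Cminus b a)))) (Cminus b a)) =
            Cmult (Cminus (g1 (Cplus a (Cmult (RtoC t) (Cminus b a)))) (g2 (Cplus a (Cmult (RtoC t) (Cminus b a))))) (Cminus b a)). ring. }
  apply (is_RInt_minus (V:=CV)); apply (RInt_correct (V:=CV)), segF_ex; auto.
Qed.

Definition Lf (u w : C) : R := fst (Cmult (Cconj u) w).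

Lemma Lf_lin u p q t : Lf u (Cplus p (Cmult (RtoC t) (Cminus q p))) = (1 - t) * Lf u p + t * Lf u q.
Proof. destruct u, p, q. unfold Lf, Cconj, Cmult, Cplus, Cminus, Copp, RtoC. simpl. ring. Qed.

Lemma Lf_lip u x y : Rabs (Lf u x - Lf u y) <= Cmod u * Cmod (Cminus x y).
Proof.
  replace (Lf u x - Lf u y) with (fst (Cmult (Cconj u) (Cminus x y))).
  2: { destruct u, x, y. unfold Lf, Cconj, Cmult, Cplus, Cminus, Copp. simpl. ring. }
  eapply Rle_trans. apply Rabs_fst_le. rewrite Cmod_mult, Cmod_conj. lra.
Qed.

Definition Reg (rho : R) (u : C) (dl : R) (w : C) : Prop := Cmod w <= rho /\ dl <= Lf u w.

Lemma Cmod_convex p q t : 0 <= t <= 1 -> Cmod (Cplus p (Cmult (RtoC t) (Cminus q p))) <= (1 - t) * Cmod p + t * Cmod q.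
Proof.
  intros Ht. replace (Cplus p (Cmult (RtoC t) (Cminus q p))) with (Cplus (Cmult (RtoC (1 - t)) p) (Cmult (RtoC t) q))
    by (rewrite RtoC_minus; ring).
  eapply Rle_trans. apply Cmod_triangle. rewrite !Cmod_RtoC_mult. rewrite !Rabs_right by lra. lra.
Qed.

Lemma Reg_convex rho u dl p q t : Reg rho u dl p -> Reg rho u dl q -> 0 <= t <= 1 ->
  Reg rho u dl (Cplus p (Cmult (RtoC t) (Cminus q p))).
Proof.
  intros [H1 H2] [H3 H4] Ht. split.
  - eapply Rle_trans. apply Cmod_convex; auto. nra.
  - rewrite Lf_lin. nra.
Qed.

Definition Good (g : C -> C) (rho : R) (u : C) (dl : R) : Prop :=
  forall w, Reg rho u dl w -> Ccont g w /\ exists l, isD g w l.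

Lemma Good_SegCont g rho u dl p q : Good g rho u dl -> Reg rho u dl p -> Reg rho u dl q -> SegCont g p q.
Proof. intros HG Hp Hq t Ht. apply HG, Reg_convex; auto. Qed.

Definition mid (p q : C) : C := Cplus p (Cmult (RtoC (/ 2)) (Cminus q p)).

Lemma Reg_mid rho u dl p q : Reg rho u dl p -> Reg rho u dl q -> Reg rho u dl (mid p q).
Proof. intros; apply Reg_convex; auto; lra. Qed.

Lemma tri_subdiv g rho u dl a b c : Good g rho u dl -> Reg rho u dl a -> Reg rho u dl b -> Reg rho u dl c ->
  tri g a b c = Cplus (Cplus (tri g a (mid a b) (mid c a)) (tri g (mid a b) b (mid b c)))
                      (Cplus (tri g (mid c a) (mid b c) c) (tri g (mid a b) (mid b c) (mid c a))).
Proof.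
  intros HG Ha Hb Hc.
  assert (Hab := Reg_mid _ _ _ _ _ Ha Hb). assert (Hbc := Reg_mid _ _ _ _ _ Hb Hc). assert (Hca := Reg_mid _ _ _ _ _ Hc Ha).
  unfold tri.
  rewrite (seg_split g a b (/ 2)) by (try apply (Good_SegCont g rho u dl); auto; lra).
  rewrite (seg_split g b c (/ 2)) by (try apply (Good_SegCont g rho u dl); auto; lra).
  rewrite (seg_split g c a (/ 2)) by (try apply (Good_SegCont g rho u dl); auto; lra).
  fold (mid a b) (mid b c) (mid c a).
  rewrite (seg_rev g (mid a b) (mid c a)) by (apply (Good_SegCont g rho u dl); auto).
  rewrite (seg_rev g (mid a b) (mid b c)) by (apply (Good_SegCont g rho u dl); auto).
  rewrite (seg_rev g (mid b c) (mid c a)) by (apply (Good_SegCont g rho u dl); auto).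
  ring.
Qed.

Definition per (a b c : C) : R := Cmod (Cminus b a) + Cmod (Cminus c b) + Cmod (Cminus a c).

Lemma half_C : RtoC (/ 2) = Cinv (RtoC 2).
Proof. apply RtoC_inv. lra. Qed.

Lemma C2_neq0 : RtoC 2 <> RtoC 0.
Proof. intros H. apply RtoC_inj in H. lra. Qed.

Lemma Cmod_half z : Cmod (Cmult (RtoC (/ 2)) z) = / 2 * Cmod z.
Proof. rewrite Cmod_RtoC_mult, Rabs_right by lra. reflexivity. Qed.

Lemma Cmod_half_eq x z : x = Cmult (RtoC (/ 2)) z -> Cmod x = / 2 * Cmod z.
Proof. intros ->. apply Cmod_half. Qed.

Lemma Cmod_minus_sym x y : Cmod (Cminus x y) = Cmod (Cminus y x).
Proof. replace (Cminus x y) with (Copp (Cminus y x)) by ring. apply Cmod_opp. Qed.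

Ltac halfeq := unfold mid; rewrite half_C; field; apply C2_neq0.

Lemma per_sub0 a b c : per a (mid a b) (mid c a) = / 2 * per a b c.
Proof.
  unfold per.
  rewrite (Cmod_half_eq (Cminus (mid a b) a) (Cminus b a)) by halfeq.
  rewrite (Cmod_half_eq (Cminus (mid c a) (mid a b)) (Cminus c b)) by halfeq.
  rewrite (Cmod_half_eq (Cminus a (mid c a)) (Cminus a c)) by halfeq. ring.
Qed.

Lemma per_sub1 a b c : per (mid a b) b (mid b c) = / 2 * per a b c.
Proof.
  unfold per.
  rewrite (Cmod_half_eq (Cminus b (mid a b)) (Cminus b a)) by halfeq.
  rewrite (Cmod_half_eq (Cminus (mid b c) b) (Cminus c b)) by halfeq.
  rewrite (Cmod_half_eq (Cminus (mid a b) (mid b c)) (Cminus a c)) by halfeq. ring.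
Qed.

Lemma per_sub2 a b c : per (mid c a) (mid b c) c = / 2 * per a b c.
Proof.
  unfold per.
  rewrite (Cmod_half_eq (Cminus (mid b c) (mid c a)) (Cminus b a)) by halfeq.
  rewrite (Cmod_half_eq (Cminus c (mid b c)) (Cminus c b)) by halfeq.
  rewrite (Cmod_half_eq (Cminus (mid c a) c) (Cminus a c)) by halfeq. ring.
Qed.

Lemma per_sub3 a b c : per (mid a b) (mid b c) (mid c a) = / 2 * per a b c.
Proof.
  unfold per.
  rewrite (Cmod_half_eq (Cminus (mid b c) (mid a b)) (Cminus c a)) by halfeq.
  rewrite (Cmod_half_eq (Cminus (mid c a) (mid b c)) (Cminus a b)) by halfeq.
  rewrite (Cmod_half_eq (Cminus (mid a b) (mid c a)) (Cminus b c)) by halfeq.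
  rewrite (Cmod_minus_sym c a), (Cmod_minus_sym a b), (Cmod_minus_sym b c). ring.
Qed.

Lemma side_le_per a b c : Cmod (Cminus b a) <= per a b c /\ Cmod (Cminus c b) <= per a b c /\ Cmod (Cminus a c) <= per a b c
  /\ Cmod (Cminus c a) <= per a b c.
Proof.
  unfold per. pose proof (Cmod_ge_0 (Cminus b a)). pose proof (Cmod_ge_0 (Cminus c b)). pose proof (Cmod_ge_0 (Cminus a c)).
  rewrite (Cmod_minus_sym c a). lra.
Qed.

Definition T3 := (C * C * C)%type.

Definition subT (k : nat) (T : T3) : T3 :=
  match T with (a, b, c) =>
  match k with
  | O => (a, mid a b, mid c a)
  | 1%nat => (mid a b, b, mid b c)
  | 2%nat => (mid c a, mid b c, c)
  | _ => (mid a b, mid b c, mid c a)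
  end end.

Definition triT (g : C -> C) (T : T3) : C := match T with (a, b, c) => tri g a b c end.
Definition perT (T : T3) : R := match T with (a, b, c) => per a b c end.
Definition RegT rho u dl (T : T3) : Prop := match T with (a, b, c) => Reg rho u dl a /\ Reg rho u dl b /\ Reg rho u dl c end.
Definition fstT (T : T3) : C := match T with (a, b, c) => a end.

Definition pick (g : C -> C) (T : T3) : T3 :=
  if Rle_dec (Cmod (triT g T) / 4) (Cmod (triT g (subT 0 T))) then subT 0 T
  else if Rle_dec (Cmod (triT g T) / 4) (Cmod (triT g (subT 1 T))) then subT 1 T
  else if Rle_dec (Cmod (triT g T) / 4) (Cmod (triT g (subT 2 T))) then subT 2 T
  else subT 3 T.

Lemma pick_props g rho u dl T : Good g rho u dl -> RegT rho u dl T ->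
  RegT rho u dl (pick g T) /\ perT (pick g T) = / 2 * perT T /\
  Cmod (triT g T) / 4 <= Cmod (triT g (pick g T)) /\ Cmod (Cminus (fstT (pick g T)) (fstT T)) <= perT T.
Proof.
  intros HG HT. destruct T as [[a b] c]. destruct HT as (Ha & Hb & Hc).
  assert (Hab := Reg_mid _ _ _ _ _ Ha Hb). assert (Hbc := Reg_mid _ _ _ _ _ Hb Hc). assert (Hca := Reg_mid _ _ _ _ _ Hc Ha).
  pose proof (side_le_per a b c) as (S1 & S2 & S3 & S4).
  assert (Mab : Cmod (Cminus (mid a b) a) <= per a b c).
  { rewrite (Cmod_half_eq (Cminus (mid a b) a) (Cminus b a)) by halfeq. pose proof (Cmod_ge_0 (Cminus b a)). lra. }
  assert (Mca : Cmod (Cminus (mid c a) a) <= per a b c).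
  { rewrite (Cmod_half_eq (Cminus (mid c a) a) (Cminus c a)) by halfeq. pose proof (Cmod_ge_0 (Cminus c a)). lra. }
  assert (Hsum := tri_subdiv g rho u dl a b c HG Ha Hb Hc).
  unfold pick. simpl.
  destruct (Rle_dec _ _) as [P0|P0]. 
  { simpl. refine (conj (conj Ha (conj Hab Hca)) (conj (per_sub0 a b c) (conj P0 _))). replace (Cminus a a) with (RtoC 0) by ring. rewrite Cmod_0.
    pose proof (Cmod_ge_0 (Cminus b a)). pose proof (Cmod_ge_0 (Cminus c b)). pose proof (Cmod_ge_0 (Cminus a c)). unfold per. lra. }
  destruct (Rle_dec _ _) as [P1|P1]. { simpl. exact (conj (conj Hab (conj Hb Hbc)) (conj (per_sub1 a b c) (conj P1 Mab))). }
  destruct (Rle_dec _ _) as [P2|P2]. { simpl. exact (conj (conj Hca (conj Hbc Hc)) (conj (per_sub2 a b c) (conj P2 Mca))). }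
  simpl. refine (conj (conj Hab (conj Hbc Hca)) (conj (per_sub3 a b c) (conj _ Mab))).
  apply Rnot_le_lt in P0, P1, P2.
  rewrite Hsum in *.
  set (x0 := tri g a (mid a b) (mid c a)) in *. set (x1 := tri g (mid a b) b (mid b c)) in *.
  set (x2 := tri g (mid c a) (mid b c) c) in *. set (x3 := tri g (mid a b) (mid b c) (mid c a)) in *.
  pose proof (Cmod_triangle (Cplus x0 x1) (Cplus x2 x3)). pose proof (Cmod_triangle x0 x1). pose proof (Cmod_triangle x2 x3).
  lra.
Qed.

Definition seqT (g : C -> C) (T : T3) (n : nat) : T3 := Nat.iter n (pick g) T.

Lemma seqT_props g rho u dl T : Good g rho u dl -> RegT rho u dl T -> forall n,
  RegT rho u dl (seqT g T n) /\ perT (seqT g T n) = perT T * (/ 2) ^ n /\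
  Cmod (triT g T) * (/ 4) ^ n <= Cmod (triT g (seqT g T n)) /\
  Cmod (Cminus (fstT (seqT g T (S n))) (fstT (seqT g T n))) <= perT (seqT g T n).
Proof.
  intros HG HT. induction n as [|n IH].
  - simpl. destruct (pick_props g rho u dl T HG HT) as (A1 & A2 & A3 & A4). repeat split; auto; try lra.
  - destruct IH as (R1 & R2 & R3 & R4).
    destruct (pick_props g rho u dl _ HG R1) as (A1 & A2 & A3 & A4).
    destruct (pick_props g rho u dl _ HG A1) as (B1 & B2 & B3 & B4).
    change (seqT g T (S n)) with (pick g (seqT g T n)).
    change (seqT g T (S (S n))) with (pick g (pick g (seqT g T n))).
    split; [exact A1|]. split. rewrite A2, R2. simpl. ring.
    split; [|exact B4].
    simpl. apply Rle_trans with (Cmod (triT g (seqT g T n)) / 4). lra. exact A3.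
Qed.

Lemma seqT_cauchy g rho u dl T : Good g rho u dl -> RegT rho u dl T -> forall n j,
  Cmod (Cminus (fstT (seqT g T (n + j))) (fstT (seqT g T n))) <= 2 * (perT T * (/ 2) ^ n) * (1 - (/ 2) ^ j).
Proof.
  intros HG HT n j. induction j as [|j IH].
  - rewrite Nat.add_0_r. replace (Cminus _ _) with (RtoC 0) by ring. rewrite Cmod_0. simpl. lra.
  - destruct (seqT_props g rho u dl T HG HT (n + j)) as (_ & P2 & _ & P4).
    rewrite Nat.add_succ_r.
    replace (Cminus (fstT (seqT g T (S (n + j)))) (fstT (seqT g T n)))
      with (Cplus (Cminus (fstT (seqT g T (S (n + j)))) (fstT (seqT g T (n + j)))) (Cminus (fstT (seqT g T (n + j))) (fstT (seqT g T n)))) by ring.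
    eapply Rle_trans. apply Cmod_triangle. rewrite P2 in P4. rewrite pow_add in P4.
    replace ((/ 2) ^ S j) with (/ 2 * (/ 2) ^ j) by reflexivity. lra.
Qed.

Lemma seqT_cauchy' g rho u dl T : Good g rho u dl -> RegT rho u dl T -> forall n m, (n <= m)%nat ->
  Cmod (Cminus (fstT (seqT g T m)) (fstT (seqT g T n))) <= 2 * (perT T * (/ 2) ^ n).
Proof.
  intros HG HT n m Hnm. replace m with (n + (m - n))%nat by lia.
  eapply Rle_trans. apply (seqT_cauchy g rho u dl T HG HT).
  assert (0 <= perT T) by (destruct T as [[a b] c]; unfold perT, per; pose proof (Cmod_ge_0 (Cminus b a)); pose proof (Cmod_ge_0 (Cminus c b)); pose proof (Cmod_ge_0 (Cminus a c)); lra).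
  assert (0 < (/ 2) ^ n) by (apply pow_lt; lra). assert (0 < (/ 2) ^ (m - n)) by (apply pow_lt; lra).
  assert (0 <= perT T * (/ 2) ^ n) by nra. nra.
Qed.

Lemma bnd_point a b c p q t : (p = a /\ q = b \/ p = b /\ q = c \/ p = c /\ q = a) -> 0 <= t <= 1 ->
  Cmod (Cminus (Cplus p (Cmult (RtoC t) (Cminus q p))) a) <= 2 * per a b c.
Proof.
  intros Hpq Ht. pose proof (side_le_per a b c) as (S1 & S2 & S3 & S4).
  assert (Hp : Cmod (Cminus p a) <= per a b c /\ Cmod (Cminus q p) <= per a b c).
  { destruct Hpq as [[-> ->]|[[-> ->]|[-> ->]]]; split; auto.
    replace (Cminus a a) with (RtoC 0) by ring. rewrite Cmod_0. pose proof (Cmod_ge_0 (Cminus b a)). lra. }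
  destruct Hp as [Hp1 Hp2].
  replace (Cminus (Cplus p (Cmult (RtoC t) (Cminus q p))) a) with (Cplus (Cminus p a) (Cmult (RtoC t) (Cminus q p))) by ring.
  eapply Rle_trans. apply Cmod_triangle. rewrite Cmod_RtoC_mult, Rabs_right by lra.
  pose proof (Cmod_ge_0 (Cminus q p)). nra.
Qed.

Lemma Ccont_affine al l p : Ccont (fun w => Cplus al (Cmult l w)) p.
Proof. eapply isD_Ccont. apply isD_lin. Qed.

Lemma SegCont_affine al l a b : SegCont (fun w => Cplus al (Cmult l w)) a b.
Proof. intros t _. apply Ccont_affine. Qed.

Lemma per_ge0 a b c : 0 <= per a b c.
Proof. unfold per; pose proof (Cmod_ge_0 (Cminus b a)); pose proof (Cmod_ge_0 (Cminus c b)); pose proof (Cmod_ge_0 (Cminus a c)); lra. Qed.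

Lemma goursat g rho u dl a b c : Good g rho u dl -> Reg rho u dl a -> Reg rho u dl b -> Reg rho u dl c ->
  tri g a b c = RtoC 0.
Proof.
  intros HG Ha Hb Hc.
  set (T := (a, b, c) : T3).
  assert (HT : RegT rho u dl T) by (simpl; auto).
  set (P := per a b c). assert (HP : 0 <= P) by apply per_ge0.
  assert (HPT : perT T = P) by reflexivity.
  destruct (complex_limit (fun n => fstT (seqT g T n)) (fun n => 2 * (P * (/ 2) ^ n))) as [ps Hps].
  { intros n m Hnm. rewrite <- HPT. apply (seqT_cauchy' g rho u dl T HG HT n m Hnm). }
  { intros eps Heps. destruct (half_pow_small (2 * P) eps Heps) as [N HN]. exists N. intros n Hn.
    specialize (HN n Hn). lra. }
  assert (Hreg_n : forall n, Reg rho u dl (fstT (seqT g T n))).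
  { intros n. destruct (seqT_props g rho u dl T HG HT n) as (R1 & _).
    destruct (seqT g T n) as [[x y] z]. simpl. apply R1. }
  assert (Hps_reg : Reg rho u dl ps).
  { split.
    - apply Rle_plus_epsilon. intros eps Heps.
      destruct (half_pow_small (4 * P) eps Heps) as [N HN]. specialize (HN N (le_n _)).
      specialize (Hps N). destruct (Hreg_n N) as [H1 _].
      pose proof (Cmod_sub_le ps (fstT (seqT g T N))). lra.
    - apply Rle_plus_epsilon. intros eps Heps.
      destruct (half_pow_small ((Cmod u + 1) * (4 * P)) eps Heps) as [N HN]. specialize (HN N (le_n _)).
      specialize (Hps N). destruct (Hreg_n N) as [_ H1].
      pose proof (Lf_lip u ps (fstT (seqT g T N))).
      pose proof (Rle_abs (- (Lf u ps - Lf u (fstT (seqT g T N))))). rewrite Rabs_Ropp in H0.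
      pose proof (Cmod_ge_0 u). pose proof (Cmod_ge_0 (Cminus ps (fstT (seqT g T N)))).
      assert (Cmod u * Cmod (Cminus ps (fstT (seqT g T N))) <= Cmod u * (2 * (2 * (P * (/ 2) ^ N)))) by (apply Rmult_le_compat_l; lra).
      assert (0 < (/ 2) ^ N) by (apply pow_lt; lra).
      assert (0 <= P * (/ 2) ^ N) by nra.
      nra. }
  destruct (HG ps Hps_reg) as [_ [l Hl]].
  pose proof (isD_CD _ _ _ Hl) as HD.
  apply Cmod_eq_0. apply Rle_antisym; [|apply Cmod_ge_0].
  apply Rle_plus_epsilon. intros eps Heps. rewrite Rplus_0_l.
  set (e1 := eps / (6 * (P * P) + 1)).
  assert (He1 : 0 < e1) by (apply Rdiv_lt_0_compat; nra).
  destruct (HD e1 He1) as [del [Hdel Hdel']].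
  destruct (half_pow_small (6 * P) del Hdel) as [n Hn]. specialize (Hn n (le_n _)).
  destruct (seqT_props g rho u dl T HG HT n) as (R1 & R2 & R3 & _).
  specialize (Hps n).
  destruct (seqT g T n) as [[an bn] cn] eqn:En. simpl in R1, R2, R3, Hps.
  destruct R1 as (Ran & Rbn & Rcn). fold P in R2. fold P in R3.
  set (Pn := P * (/ 2) ^ n) in *.
  assert (HPn : 0 <= Pn) by (unfold Pn; assert (0 < (/ 2) ^ n) by (apply pow_lt; lra); nra).
  set (al := Cminus (g ps) (Cmult l ps)).
  set (A := fun w => Cplus al (Cmult l w)).
  assert (Etri : tri g an bn cn = tri (fun w => Cminus (g w) (A w)) an bn cn).
  { unfold tri. rewrite !seg_minus; try apply SegCont_affine; try (apply (Good_SegCont g rho u dl); auto).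
    pose proof (tri_affine al l an bn cn) as E0. unfold tri in E0. unfold A. 
    replace (seg (fun w : C => Cplus al (Cmult l w)) an bn) with
      (Cminus (RtoC 0) (Cplus (seg (fun w : C => Cplus al (Cmult l w)) bn cn) (seg (fun w : C => Cplus al (Cmult l w)) cn an))).
    ring. rewrite <- E0. ring. }
  assert (Hside : forall p q, (p = an /\ q = bn \/ p = bn /\ q = cn \/ p = cn /\ q = an) ->
     Cmod (seg (fun w => Cminus (g w) (A w)) p q) <= (e1 * (6 * Pn)) * Cmod (Cminus q p)).
  { intros p q Hpq. apply seg_bound.
    { intros t Ht. apply Ccont_minus. apply HG. apply Reg_convex; destruct Hpq as [[-> ->]|[[-> ->]|[-> ->]]]; auto.
      apply Ccont_affine. }
    intros t Ht. set (w := Cplus p (Cmult (RtoC t) (Cminus q p))).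
    assert (Hw : Cmod (Cminus w ps) <= 6 * Pn).
    { pose proof (bnd_point an bn cn p q t Hpq Ht). fold w in H. rewrite R2 in H. fold Pn in H.
      replace (Cminus w ps) with (Cplus (Cminus w an) (Copp (Cminus ps an))) by ring.
      eapply Rle_trans. apply Cmod_triangle. rewrite Cmod_opp. lra. }
    assert (Hw' : Cmod (Cminus w ps) < del) by (unfold Pn in *; lra).
    specialize (Hdel' w Hw').
    replace (Cminus (g w) (A w)) with (Cminus (Cminus (g w) (g ps)) (Cmult l (Cminus w ps))) by (unfold A, al; ring).
    eapply Rle_trans. exact Hdel'. apply Rmult_le_compat_l; lra. }
  assert (Hbound : Cmod (tri g an bn cn) <= (e1 * (6 * Pn)) * Pn).
  { rewrite Etri. unfold tri.
    pose proof (Hside an bn ltac:(auto)). pose proof (Hside bn cn ltac:(auto)). pose proof (Hside cn an ltac:(auto)).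
    eapply Rle_trans. apply Cmod_triangle. eapply Rle_trans. apply Rplus_le_compat_r. apply Cmod_triangle.
    apply Rle_trans with (e1 * (6 * Pn) * per an bn cn). unfold per. lra. rewrite R2. lra. }
  unfold T in R3. simpl in R3. fold P in R3.
  assert (E4 : (/ 4) ^ n = (/ 2) ^ n * (/ 2) ^ n).
  { rewrite <- Rpow_mult_distr. f_equal. field. }
  assert (HQ : 0 < (/ 4) ^ n) by (apply pow_lt; lra).
  assert (Cmod (tri g a b c) * (/ 4) ^ n <= e1 * 6 * (P * P) * (/ 4) ^ n).
  { eapply Rle_trans. exact R3. eapply Rle_trans. exact Hbound. unfold Pn. rewrite E4. right. ring. }
  apply Rmult_le_reg_r in H; auto.
  assert (E5 : e1 * (6 * (P * P) + 1) = eps) by (unfold e1; field; nra).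
  lra.
Qed.

Definition HolD (g : C -> C) : Prop :=
  (forall w, in_disc w -> Ccont g w) /\ (forall w, in_disc w -> w <> RtoC 0 -> exists l, isD g w l).

Lemma disc_convex p q t : in_disc p -> in_disc q -> 0 <= t <= 1 -> in_disc (Cplus p (Cmult (RtoC t) (Cminus q p))).
Proof.
  unfold in_disc. intros Hp Hq Ht. eapply Rle_lt_trans. apply Cmod_convex; auto.
  assert ((1 - t) * Cmod p <= (1 - t) * Rmax (Cmod p) (Cmod q)) by (apply Rmult_le_compat_l; [lra| apply Rmax_l]).
  assert (t * Cmod q <= t * Rmax (Cmod p) (Cmod q)) by (apply Rmult_le_compat_l; [lra| apply Rmax_r]).
  assert (Rmax (Cmod p) (Cmod q) < 1) by (apply Rmax_lub_lt; auto). nra.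
Qed.

Lemma HolD_SegCont g p q : HolD g -> in_disc p -> in_disc q -> SegCont g p q.
Proof. intros [H _] Hp Hq t Ht. apply H, disc_convex; auto. Qed.

Lemma seg_same g p : seg g p p = RtoC 0.
Proof.
  unfold seg. apply (is_RInt_unique (V:=CV)).
  apply (is_RInt_ext (V:=CV)) with (fun _ => (RtoC 0 : CV)).
  { intros t _. unfold segF. match goal with |- ?x = ?y => change (@eq C x y) end.
    replace (Cminus p p) with (RtoC 0) by ring. ring. }
  eapply is_RInt_val. apply (is_RInt_const (V:=CV)). rewrite scal_R_Cmult. 
  change (Cmult (RtoC (1 - 0)) (RtoC 0) = RtoC 0). ring.
Qed.

Lemma scal_point (e : R) (a : C) : Cplus (RtoC 0) (Cmult (RtoC e) (Cminus a (RtoC 0))) = Cmult (RtoC e) a.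
Proof. ring. Qed.

Lemma Cmod_RtoC_le1 e a : 0 <= e <= 1 -> Cmod (Cmult (RtoC e) a) <= Cmod a.
Proof. intros He. rewrite Cmod_RtoC_mult, Rabs_right by lra. pose proof (Cmod_ge_0 a). nra. Qed.

Lemma in_disc_scal e a : 0 <= e <= 1 -> in_disc a -> in_disc (Cmult (RtoC e) a).
Proof. unfold in_disc. intros. eapply Rle_lt_trans. apply Cmod_RtoC_le1; auto. auto. Qed.

Lemma in_disc_0 : in_disc (RtoC 0).
Proof. unfold in_disc. rewrite Cmod_0. lra. Qed.

Lemma tri0_decomp g a b e : HolD g -> in_disc a -> in_disc b -> 0 <= e <= 1 ->
  tri g (RtoC 0) a b = Cplus (Cplus (tri g (RtoC 0) (Cmult (RtoC e) a) (Cmult (RtoC e) b))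
                                    (tri g (Cmult (RtoC e) a) a b)) (tri g (Cmult (RtoC e) a) b (Cmult (RtoC e) b)).
Proof.
  intros HG Ha Hb He.
  assert (Hea := in_disc_scal e a He Ha). assert (Heb := in_disc_scal e b He Hb).
  unfold tri.
  rewrite (seg_split g (RtoC 0) a e) by (try apply HolD_SegCont; auto using in_disc_0).
  rewrite scal_point.
  rewrite (seg_split g b (RtoC 0) (1 - e)) by (try apply HolD_SegCont; auto using in_disc_0; lra).
  replace (Cplus b (Cmult (RtoC (1 - e)) (Cminus (RtoC 0) b))) with (Cmult (RtoC e) b) by (rewrite RtoC_minus; ring).
  rewrite (seg_rev g (Cmult (RtoC e) a) (Cmult (RtoC e) b)) by (apply HolD_SegCont; auto).
  rewrite (seg_rev g (Cmult (RtoC e) a) b) by (apply HolD_SegCont; auto).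
  ring.
Qed.

Lemma Cmod_convex_max p q t r : 0 <= t <= 1 -> Cmod p <= r -> Cmod q <= r -> Cmod (Cplus p (Cmult (RtoC t) (Cminus q p))) <= r.
Proof.
  intros Ht Hp Hq. eapply Rle_trans. apply Cmod_convex; auto.
  assert ((1 - t) * Cmod p <= (1 - t) * r) by (apply Rmult_le_compat_l; lra).
  assert (t * Cmod q <= t * r) by (apply Rmult_le_compat_l; lra). lra.
Qed.

Lemma small_tri_bound g a b e M d0 : HolD g -> in_disc a -> in_disc b -> 0 <= e <= 1 ->
  e * Rmax (Cmod a) (Cmod b) < d0 -> (forall w, Cmod w < d0 -> Cmod (g w) <= M) ->
  Cmod (tri g (RtoC 0) (Cmult (RtoC e) a) (Cmult (RtoC e) b)) <= 6 * M * (e * Rmax (Cmod a) (Cmod b)).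
Proof.
  intros HG Ha Hb He Hd HM.
  set (r := e * Rmax (Cmod a) (Cmod b)) in *.
  assert (Hr0 : 0 <= r) by (unfold r; pose proof (Rmax_l (Cmod a) (Cmod b)); pose proof (Cmod_ge_0 a); nra).
  assert (Hea : Cmod (Cmult (RtoC e) a) <= r) by (rewrite Cmod_RtoC_mult, Rabs_right by lra; apply Rmult_le_compat_l; [lra|apply Rmax_l]).
  assert (Heb : Cmod (Cmult (RtoC e) b) <= r) by (rewrite Cmod_RtoC_mult, Rabs_right by lra; apply Rmult_le_compat_l; [lra|apply Rmax_r]).
  assert (H0r : Cmod (RtoC 0) <= r) by (rewrite Cmod_0; lra).
  assert (HM0 : 0 <= M). { specialize (HM (RtoC 0)). rewrite Cmod_0 in HM. pose proof (Cmod_ge_0 (g (RtoC 0))). 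
    assert (0 < d0) by lra. specialize (HM H0). lra. }
  assert (Hsb : forall p q, Cmod p <= r -> Cmod q <= r -> in_disc p -> in_disc q -> Cmod (seg g p q) <= M * (2 * r)).
  { intros p q Hp Hq Dp Dq. eapply Rle_trans. apply seg_bound. apply HolD_SegCont; auto.
    intros t Ht. apply HM. eapply Rle_lt_trans. apply Cmod_convex_max; eauto. lra.
    apply Rmult_le_compat_l; auto. replace (Cminus q p) with (Cplus q (Copp p)) by ring.
    eapply Rle_trans. apply Cmod_triangle. rewrite Cmod_opp. lra. }
  assert (Da := in_disc_scal e a He Ha). assert (Db := in_disc_scal e b He Hb).
  unfold tri.
  pose proof (Hsb _ _ H0r Hea in_disc_0 Da). pose proof (Hsb _ _ Hea Heb Da Db). pose proof (Hsb _ _ Heb H0r Db in_disc_0).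
  eapply Rle_trans. apply Cmod_triangle. eapply Rle_trans. apply Rplus_le_compat_r. apply Cmod_triangle.
  nra.
Qed.

Lemma tri0_indep g a b : HolD g -> in_disc a -> in_disc b -> fst a * snd b - snd a * fst b <> 0 ->
  tri g (RtoC 0) a b = RtoC 0.
Proof.
  intros HG Ha Hb Hc.
  set (c := fst a * snd b - snd a * fst b) in *.
  set (s := if Rlt_dec 0 c then 1 else -1).
  assert (Hsc : 0 < s * c) by (unfold s; destruct (Rlt_dec 0 c); lra).
  set (u := (s * (snd b - snd a), - (s * (fst b - fst a))) : C).
  assert (Lfe : forall e w, Lf u (Cmult (RtoC e) w) = e * Lf u w).
  { intros e [w1 w2]. unfold Lf, u, Cconj, Cmult, RtoC. simpl. ring. }
  assert (La : Lf u a = s * c). { unfold Lf, u, c, Cconj, Cmult. destruct a, b. simpl. ring. }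
  assert (Lb : Lf u b = s * c). { unfold Lf, u, c, Cconj, Cmult. destruct a, b. simpl. ring. }
  set (rho := Rmax (Cmod a) (Cmod b)).
  assert (Hrho : rho < 1) by (apply Rmax_lub_lt; auto).
  assert (Hrho0 : 0 <= rho) by (unfold rho; pose proof (Rmax_l (Cmod a) (Cmod b)); pose proof (Cmod_ge_0 a); lra).
  assert (Hpart : forall e, 0 < e <= 1 -> tri g (RtoC 0) a b = tri g (RtoC 0) (Cmult (RtoC e) a) (Cmult (RtoC e) b)).
  { intros e He.
    assert (HGood : Good g rho u (e * (s * c))).
    { intros w [Hw1 Hw2]. destruct HG as [HC HD]. split. apply HC. unfold in_disc. lra.
      apply HD. unfold in_disc; lra. intros ->. unfold Lf in Hw2. simpl in Hw2. 
      assert (0 < e * (s * c)) by nra. lra. }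
    assert (Rea : Reg rho u (e * (s * c)) (Cmult (RtoC e) a)).
    { split. rewrite Cmod_RtoC_mult, Rabs_right by lra. unfold rho. pose proof (Rmax_l (Cmod a) (Cmod b)). pose proof (Cmod_ge_0 a). nra.
      rewrite Lfe, La. lra. }
    assert (Reb : Reg rho u (e * (s * c)) (Cmult (RtoC e) b)).
    { split. rewrite Cmod_RtoC_mult, Rabs_right by lra. unfold rho. pose proof (Rmax_r (Cmod a) (Cmod b)). pose proof (Cmod_ge_0 b). nra.
      rewrite Lfe, Lb. lra. }
    assert (Ra : Reg rho u (e * (s * c)) a). { split. apply Rmax_l. rewrite La. nra. }
    assert (Rb : Reg rho u (e * (s * c)) b). { split. apply Rmax_r. rewrite Lb. nra. }
    rewrite (tri0_decomp g a b e HG Ha Hb ltac:(lra)).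
    rewrite (goursat g rho u (e * (s * c)) (Cmult (RtoC e) a) a b HGood Rea Ra Rb).
    rewrite (goursat g rho u (e * (s * c)) (Cmult (RtoC e) a) b (Cmult (RtoC e) b) HGood Rea Rb Reb).
    ring. }
  destruct HG as [HC HD].
  destruct (HC (RtoC 0) in_disc_0 1 Rlt_0_1) as [d0 [Hd0 Hd0']].
  set (M := Cmod (g (RtoC 0)) + 1).
  assert (HM : forall w, Cmod w < d0 -> Cmod (g w) <= M).
  { intros w Hw. replace (Cminus w (RtoC 0)) with w in Hd0' by ring. specialize (Hd0' w).
    replace (Cminus w (RtoC 0)) with w in Hd0' by ring. specialize (Hd0' Hw).
    pose proof (Cmod_sub_le (g w) (g (RtoC 0))). unfold M. lra. }
  assert (HM0 : 0 < M) by (unfold M; pose proof (Cmod_ge_0 (g (RtoC 0))); lra).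
  apply Cmod_eq_0. apply Rle_antisym; [|apply Cmod_ge_0].
  apply Rle_plus_epsilon. intros eps Heps. rewrite Rplus_0_l.
  set (e := Rmin 1 (Rmin (d0 / (2 * (rho + 1))) (eps / (6 * M * (rho + 1))))).
  assert (He : 0 < e <= 1).
  { split. unfold e. repeat apply Rmin_pos; try lra; apply Rdiv_lt_0_compat; nra. apply Rmin_l. }
  assert (He2 : e <= d0 / (2 * (rho + 1))) by (eapply Rle_trans; [apply Rmin_r| apply Rmin_l]).
  assert (He3 : e <= eps / (6 * M * (rho + 1))) by (eapply Rle_trans; [apply Rmin_r| apply Rmin_r]).
  rewrite (Hpart e He).
  eapply Rle_trans. apply (small_tri_bound g a b e M d0); auto. split; auto. lra.
  { apply Rle_lt_trans with (e * (rho + 1)). fold rho. apply Rmult_le_compat_l; lra.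
    apply (Rmult_le_compat_r (rho + 1)) in He2; [|lra]. replace (d0 / (2 * (rho + 1)) * (rho + 1)) with (d0 / 2) in He2 by (field; lra). lra. }
  fold rho.
  apply (Rmult_le_compat_r (6 * M * (rho + 1))) in He3; [|nra].
  replace (eps / (6 * M * (rho + 1)) * (6 * M * (rho + 1))) with eps in He3 by (field; nra).
  assert (6 * M * (e * rho) <= e * (6 * M * (rho + 1))). { assert (0 < e) by lra. nra. }
  lra.
Qed.

Lemma tri0_zero g b : HolD g -> in_disc b -> tri g (RtoC 0) (RtoC 0) b = RtoC 0.
Proof.
  intros HG Hb. unfold tri. rewrite seg_same. rewrite (seg_rev g (RtoC 0) b) by (apply HolD_SegCont; auto using in_disc_0). ring.
Qed.

Lemma tri0_line g a k : HolD g -> in_disc a -> in_disc (Cmult (RtoC k) a) -> tri g (RtoC 0) a (Cmult (RtoC k) a) = RtoC 0.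
Proof.
  intros HG Ha Hb.
  set (F := segF g (RtoC 0) a).
  assert (HF : forall s, Rabs s <= Rmax 1 (Rabs k) -> @continuous R_UniformSpace (NormedModule.UniformSpace R_AbsRing C_R_NormedModule) F s).
  { intros s Hs. apply segF_cont. destruct HG as [HC _]. apply HC.
    replace (Cplus (RtoC 0) (Cmult (RtoC s) (Cminus a (RtoC 0)))) with (Cmult (RtoC s) a) by ring.
    unfold in_disc in *. rewrite Cmod_RtoC_mult. rewrite Cmod_RtoC_mult in Hb.
    pose proof (Cmod_ge_0 a). apply Rle_lt_trans with (Rmax 1 (Rabs k) * Cmod a). apply Rmult_le_compat_r; auto.
    unfold Rmax. destruct (Rle_dec 1 (Rabs k)); nra. }
  assert (HEx : forall x y, Rabs x <= Rmax 1 (Rabs k) -> Rabs y <= Rmax 1 (Rabs k) -> ex_RInt (V:=CV) F x y).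
  { intros x y Hx Hy. apply (ex_RInt_continuous (V:=CV)). intros z Hz. apply HF.
    apply Rabs_le. pose proof (Rmin_l x y). pose proof (Rmin_r x y). pose proof (Rmax_l x y). pose proof (Rmax_r x y).
    apply Rabs_le_between in Hx. apply Rabs_le_between in Hy. 
    destruct (Rle_dec x y). rewrite Rmin_left, Rmax_right in Hz by lra. lra. rewrite Rmin_right, Rmax_left in Hz by lra. lra. }
  assert (H1 : Rabs 1 <= Rmax 1 (Rabs k)) by (rewrite Rabs_R1; apply Rmax_l).
  assert (H0 : Rabs 0 <= Rmax 1 (Rabs k)) by (rewrite Rabs_R0; eapply Rle_trans; [|apply Rmax_l]; lra).
  assert (Hk : Rabs k <= Rmax 1 (Rabs k)) by apply Rmax_r.
  assert (S1 : seg g (RtoC 0) a = RInt (V:=CV) F 0 1) by reflexivity.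
  assert (S2 : seg g a (Cmult (RtoC k) a) = RInt (V:=CV) F 1 k).
  { unfold seg. apply (is_RInt_unique (V:=CV)).
    apply (is_RInt_ext (V:=CV)) with (fun t => scal (k - 1) (F ((k - 1) * t + 1))).
    { intros t _. rewrite scal_R_Cmult. unfold F, segF. match goal with |- ?x = ?y => change (@eq C x y) end.
      replace (Cplus (RtoC 0) (Cmult (RtoC ((k - 1) * t + 1)) (Cminus a (RtoC 0))))
        with (Cplus a (Cmult (RtoC t) (Cminus (Cmult (RtoC k) a) a))) by (rewrite RtoC_plus, RtoC_mult, RtoC_minus; ring).
      rewrite RtoC_minus. ring. }
    apply (is_RInt_comp_lin (V:=CV)). replace ((k - 1) * 0 + 1) with 1 by ring. replace ((k - 1) * 1 + 1) with k by ring.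
    apply (RInt_correct (V:=CV)). apply HEx; auto. }
  assert (S3 : seg g (Cmult (RtoC k) a) (RtoC 0) = RInt (V:=CV) F k 0).
  { unfold seg. apply (is_RInt_unique (V:=CV)).
    apply (is_RInt_ext (V:=CV)) with (fun t => scal (- k) (F ((- k) * t + k))).
    { intros t _. rewrite scal_R_Cmult. unfold F, segF. match goal with |- ?x = ?y => change (@eq C x y) end.
      replace (Cplus (RtoC 0) (Cmult (RtoC (- k * t + k)) (Cminus a (RtoC 0))))
        with (Cplus (Cmult (RtoC k) a) (Cmult (RtoC t) (Cminus (RtoC 0) (Cmult (RtoC k) a)))) by (rewrite RtoC_plus, RtoC_mult, RtoC_opp; ring).
      rewrite RtoC_opp. ring. }
    apply (is_RInt_comp_lin (V:=CV)). replace (- k * 0 + k) with k by ring. replace (- k * 1 + k) with 0 by ring.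
    apply (RInt_correct (V:=CV)). apply HEx; auto. }
  unfold tri. rewrite S1, S2, S3.
  rewrite <- (opp_RInt_swap (V:=CV) F 0 k) by (apply HEx; auto).
  rewrite <- (RInt_Chasles (V:=CV) F 0 1 k) by (apply HEx; auto).
  change (Cplus (Cplus (RInt (V:=CV) F 0 1) (RInt (V:=CV) F 1 k)) (Copp (Cplus (RInt (V:=CV) F 0 1) (RInt (V:=CV) F 1 k))) = RtoC 0).
  ring.
Qed.

Lemma tri0 g a b : HolD g -> in_disc a -> in_disc b -> tri g (RtoC 0) a b = RtoC 0.
Proof.
  intros HG Ha Hb.
  destruct (Req_dec (fst a * snd b - snd a * fst b) 0) as [Hc|Hc].
  2: apply tri0_indep; auto.
  destruct (Ceq_dec a (RtoC 0)) as [->|Ha0]. apply tri0_zero; auto.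
  destruct a as [a1 a2], b as [b1 b2]. simpl in Hc.
  assert (Hn : a1 * a1 + a2 * a2 <> 0).
  { intros E. apply Ha0. assert (a1 = 0) by nra. assert (a2 = 0) by nra. subst. reflexivity. }
  set (k := (a1 * b1 + a2 * b2) / (a1 * a1 + a2 * a2)).
  assert (Eb : (b1, b2) = Cmult (RtoC k) (a1, a2)).
  { assert (F1 : b1 * (a1 * a1 + a2 * a2) = (a1 * b1 + a2 * b2) * a1).
    { apply Rminus_diag_uniq. replace (b1 * (a1 * a1 + a2 * a2) - (a1 * b1 + a2 * b2) * a1) with (- a2 * (a1 * b2 - a2 * b1)) by ring. rewrite Hc. ring. }
    assert (F2 : b2 * (a1 * a1 + a2 * a2) = (a1 * b1 + a2 * b2) * a2).
    { apply Rminus_diag_uniq. replace (b2 * (a1 * a1 + a2 * a2) - (a1 * b1 + a2 * b2) * a2) with (a1 * (a1 * b2 - a2 * b1)) by ring. rewrite Hc. ring. }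
    assert (E1 : k * a1 = b1). { unfold k. apply (Rmult_eq_reg_r (a1 * a1 + a2 * a2)); auto. rewrite F1. field. auto. }
    assert (E2 : k * a2 = b2). { unfold k. apply (Rmult_eq_reg_r (a1 * a1 + a2 * a2)); auto. rewrite F2. field. auto. }
    unfold Cmult, RtoC. simpl. f_equal; lra. }
  rewrite Eb in *. apply tri0_line; auto.
Qed.

Lemma prim_deriv g z0 : HolD g -> in_disc z0 -> isD (fun z => seg g (RtoC 0) z) z0 (g z0).
Proof.
  intros HG Hz0. apply CD_isD. intros eps Heps.
  destruct HG as [HC HD].
  destruct (HC z0 Hz0 eps Heps) as [d [Hd Hd']].
  exists (Rmin d (1 - Cmod z0)). split. apply Rmin_pos; auto. unfold in_disc in Hz0; lra.
  intros z Hz.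
  assert (Hz1 : Cmod (Cminus z z0) < d) by (eapply Rlt_le_trans; [exact Hz|apply Rmin_l]).
  assert (Hz2 : Cmod (Cminus z z0) < 1 - Cmod z0) by (eapply Rlt_le_trans; [exact Hz|apply Rmin_r]).
  assert (Dz : in_disc z). { unfold in_disc. pose proof (Cmod_sub_le z z0). lra. }
  assert (HG : HolD g) by (split; auto).
  pose proof (tri0 g z0 z HG Hz0 Dz) as T. unfold tri in T.
  rewrite (seg_rev g (RtoC 0) z) in T by (apply HolD_SegCont; auto using in_disc_0).
  assert (E : Cminus (seg g (RtoC 0) z) (seg g (RtoC 0) z0) = seg g z0 z).
  { apply (f_equal (fun x => Cplus x (Cminus (seg g (RtoC 0) z) (seg g (RtoC 0) z0)))) in T.
    replace (Cplus (RtoC 0) (Cminus (seg g (RtoC 0) z) (seg g (RtoC 0) z0))) with (Cminus (seg g (RtoC 0) z) (seg g (RtoC 0) z0)) in T by ring.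
    rewrite <- T. ring. }
  rewrite E. rewrite <- seg_minus_const by (apply HolD_SegCont; auto).
  apply seg_bound. apply SegCont_minus_const, HolD_SegCont; auto.
  intros t Ht. left. apply Hd'.
  replace (Cminus (Cplus z0 (Cmult (RtoC t) (Cminus z z0))) z0) with (Cmult (RtoC t) (Cminus z z0)) by ring.
  eapply Rle_lt_trans. apply Cmod_RtoC_le1; auto. auto.
Qed.

Lemma cesaro_seg beta f z : cesaro beta f z = seg (gf beta f) (RtoC 0) z.
Proof.
  unfold cesaro, seg. apply (RInt_ext (V:=CV)).
  rewrite Rmin_left, Rmax_right by lra. intros t Ht.
  unfold segF. change (@eq C
    (Cmult (Cdiv (f (Cmult (RtoC t) z)) (Cmult (Cmult (RtoC t) z) (Defs.Cpow (Cminus (RtoC 1) (Cmult (RtoC t) z)) beta))) z)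
    (Cmult (gf beta f (Cplus (RtoC 0) (Cmult (RtoC t) (Cminus z (RtoC 0))))) (Cminus z (RtoC 0)))).
  replace (Cplus (RtoC 0) (Cmult (RtoC t) (Cminus z (RtoC 0)))) with (Cmult (RtoC t) z) by ring.
  replace (Cminus z (RtoC 0)) with z by ring.
  destruct (Ceq_dec z (RtoC 0)) as [->|Hz]. { rewrite !Cmult_0_r. reflexivity. }
  unfold gf. destruct (Ceq_dec (Cmult (RtoC t) z) (RtoC 0)) as [E|E].
  { exfalso. revert E. apply Cmult_neq_0; auto. intros Et. apply RtoC_inj in Et. lra. }
  reflexivity.
Qed.

Lemma ln_ge_1_minus_inv y : 0 < y -> 1 - / y <= ln y.
Proof.
  intros Hy. pose proof (exp_ineq1_le (ln (/ y))). rewrite exp_ln in H by (apply Rinv_0_lt_compat; lra).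
  rewrite ln_Rinv in H by lra. lra.
Qed.

Lemma exp_mono a b : a <= b -> exp a <= exp b.
Proof. intros [H|H]. left; apply exp_increasing; auto. subst; lra. Qed.

Lemma xL_bound x d : 0 < x <= 1 -> 0 < d -> d * (exp (d * ln x) * (- ln x)) <= 1.
Proof.
  intros Hx Hd. set (L := - ln x).
  assert (HL : 0 <= L) by (unfold L; assert (ln x <= 0) by (rewrite <- ln_1; apply ln_le; lra); lra).
  replace (d * ln x) with (- (d * L)) by (unfold L; ring).
  rewrite exp_Ropp. pose proof (exp_ineq1_le (d * L)). pose proof (exp_pos (d * L)).
  replace (d * (/ exp (d * L) * L)) with ((d * L) / exp (d * L)) by (field; lra).
  apply (Rmult_le_reg_r (exp (d * L))); auto. unfold Rdiv. rewrite Rmult_assoc, Rinv_l, Rmult_1_r by lra. lra.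
Qed.

Lemma exp_dlnx_le1 x d : 0 < x <= 1 -> 0 <= d -> exp (d * ln x) <= 1.
Proof.
  intros Hx Hd. rewrite <- exp_0. apply exp_mono.
  assert (ln x <= 0) by (rewrite <- ln_1; apply ln_le; lra). nra.
Qed.

Definition Kc (beta : R) : R := 4 * (1 + exp (- beta * ln 2)) * (1 + / (1 - beta)).

Lemma Kc_ge1 beta : beta < 1 -> 1 <= Kc beta.
Proof.
  intros Hb. unfold Kc. pose proof (exp_pos (- beta * ln 2)).
  assert (0 < / (1 - beta)) by (apply Rinv_0_lt_compat; lra). nra.
Qed.

Lemma L_small r : 0 < r <= / 2 -> - ln (1 - r) <= 2 * r.
Proof.
  intros Hr. pose proof (ln_ge_1_minus_inv (1 - r) ltac:(lra)).
  assert (/ (1 - r) - 1 <= 2 * r).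
  { replace (/ (1 - r) - 1) with (r / (1 - r)) by (field; lra).
    apply (Rmult_le_reg_r (1 - r)). lra. unfold Rdiv. rewrite Rmult_assoc, Rinv_l, Rmult_1_r by lra. nra. }
  lra.
Qed.

Lemma key_real beta r s : beta < 1 -> 0 < r < 1 -> 1 - r <= s <= 1 + r ->
  (1 - r * r) * (- ln (1 - r)) <= Kc beta * (r * exp (beta * ln s)).
Proof.
  intros Hb Hr Hs.
  set (x := 1 - r). set (L := - ln x).
  assert (Hx : 0 < x <= 1) by (unfold x; lra).
  assert (HL : 0 <= L) by (unfold L; assert (ln x <= 0) by (rewrite <- ln_1; apply ln_le; lra); lra).
  assert (E1 : (1 - r * r) = (1 + r) * x) by (unfold x; ring).
  rewrite E1.
  assert (HK := Kc_ge1 beta Hb).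
  assert (HK4 : 4 <= Kc beta).
  { unfold Kc. pose proof (exp_pos (- beta * ln 2)). assert (0 < / (1 - beta)) by (apply Rinv_0_lt_compat; lra). nra. }
  pose proof (exp_pos (beta * ln s)) as HE.
  pose proof (exp_pos (- beta * ln 2)) as HE2.
  assert (Hid : 0 < / (1 - beta)) by (apply Rinv_0_lt_compat; lra).
  destruct (Rle_dec 0 beta) as [Hb0|Hb0].
  -
    assert (HEx : exp (beta * ln x) <= exp (beta * ln s)).
    { apply exp_mono. apply Rmult_le_compat_l; auto. apply ln_le; unfold x; lra. }
    assert (Hsplit : x = exp ((1 - beta) * ln x) * exp (beta * ln x)).
    { rewrite <- exp_plus. replace ((1 - beta) * ln x + beta * ln x) with (ln x) by ring. rewrite exp_ln; lra. }
    set (A := exp ((1 - beta) * ln x)). set (B := exp (beta * ln x)).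
    assert (HA : 0 < A) by apply exp_pos. assert (HB : 0 < B) by apply exp_pos.
    assert (HA1 : A <= 1) by (apply exp_dlnx_le1; lra).
    assert (HAL : (1 - beta) * (A * L) <= 1) by (apply xL_bound; lra).
    (* want (1+r) * (A*B) * L <= Kc * (r * E) ; since B <= E, suffices (1+r) A L <= Kc r *)
    assert (Main : (1 + r) * A * L <= Kc beta * r).
    { destruct (Rle_dec r (/ 2)) as [Hr2|Hr2].
      - pose proof (L_small r ltac:(lra)). fold x L in H.
        assert (A * L <= 2 * r) by nra.
        assert ((1 + r) * (A * L) <= 2 * (2 * r)) by (apply Rmult_le_compat; nra).
        assert (4 * r <= Kc beta * r) by nra. nra.
      - assert (A * L <= / (1 - beta)).
        { apply (Rmult_le_reg_l (1 - beta)). lra. rewrite Rinv_r by lra. lra. }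
        assert ((1 + r) * A * L <= 2 * / (1 - beta)).
        { assert ((1 + r) * (A * L) <= 2 * / (1 - beta)) by (apply Rmult_le_compat; nra). nra. }
        assert (Kc beta * r >= Kc beta / 2) by nra.
        assert (Kc beta / 2 >= 2 * / (1 - beta)).
        { unfold Kc. pose proof (exp_pos (- beta * ln 2)). nra. }
        lra. }
    rewrite Hsplit. fold A B.
    apply Rle_trans with ((1 + r) * A * L * exp (beta * ln s)).
    { assert (0 <= (1 + r) * A * L) by (apply Rmult_le_pos; [nra|lra]).
      replace ((1 + r) * (A * B) * L) with ((1 + r) * A * L * B) by ring. apply Rmult_le_compat_l; auto. }
    nra.
  -
    assert (HE2' : exp (beta * ln 2) <= exp (beta * ln s)).
    { apply exp_mono. assert (ln s <= ln 2) by (apply ln_le; lra). nra. }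
    assert (Hinv : exp (- beta * ln 2) * exp (beta * ln 2) = 1).
    { rewrite <- exp_plus. replace (- beta * ln 2 + beta * ln 2) with 0 by ring. apply exp_0. }
    assert (HxL : x * L <= 2 * r).
    { destruct (Rle_dec r (/ 2)) as [Hr2|Hr2].
      - pose proof (L_small r ltac:(lra)). fold x L in H. nra.
      - pose proof (xL_bound x 1 Hx ltac:(lra)). rewrite Rmult_1_l, Rmult_1_l, exp_ln in H by lra. fold L in H. nra. }
    assert (Main : (1 + r) * x * L <= 4 * r) by nra.
    apply Rle_trans with (4 * r * (exp (- beta * ln 2) * exp (beta * ln s))).
    { assert (HX : 1 <= exp (- beta * ln 2) * exp (beta * ln s)) by (rewrite <- Hinv; apply Rmult_le_compat_l; lra).
      nra. }
    unfold Kc. 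
    assert (0 <= r * exp (beta * ln s)) by nra.
    assert (4 * exp (- beta * ln 2) <= 4 * (1 + exp (- beta * ln 2)) * (1 + / (1 - beta))) by nra.
    nra.
Qed.

Lemma bloch_props f : in_B1 f ->
  (forall r, bloch_vals f r -> r <= bloch_norm f) /\
  (forall M, (forall r, bloch_vals f r -> r <= M) -> bloch_norm f <= M) /\ 0 <= bloch_norm f.
Proof.
  intros [Ha [M0 HM0]].
  assert (H0 : in_disc (RtoC 0)) by (unfold in_disc; rewrite Cmod_0; lra).
  destruct (Ha _ H0) as [l0 Hl0].
  assert (Hv0 : bloch_vals f ((1 - Cmod (RtoC 0) ^ 2) * Cmod l0)) by (exists (RtoC 0), l0; auto).
  assert (Hv0' : 0 <= (1 - Cmod (RtoC 0) ^ 2) * Cmod l0) by (rewrite Cmod_0; pose proof (Cmod_ge_0 l0); nra).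
  pose proof (Lub_Rbar_correct (bloch_vals f)) as [Hub Hlub].
  unfold bloch_norm.
  destruct (Lub_Rbar (bloch_vals f)) as [s| |] eqn:E.
  - simpl. split; [|split].
    + intros r Hr. apply (Hub r Hr).
    + intros M HM. apply (Hlub (Finite M)). intros r Hr. apply HM, Hr.
    + pose proof (Hub _ Hv0). simpl in H. lra.
  - exfalso. specialize (Hlub (Finite M0)). simpl in Hlub. apply Hlub. intros r Hr. apply HM0, Hr.
  - exfalso. specialize (Hub _ Hv0). simpl in Hub. exact Hub.
Qed.

Lemma deriv_bound f w : in_B1 f -> in_disc w -> (1 - Cmod w ^ 2) * Cmod (C_derive f w) <= bloch_norm f.
Proof.
  intros HB Hw. destruct (bloch_props f HB) as [H1 _]. apply H1.
  exists w, (C_derive f w). split; auto. split; auto.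
  apply isD_derive. apply analytic_isD; auto. apply HB.
Qed.

Lemma real_chain f v z t0 l : isD f (Cmult (RtoC t0) z) l ->
  derivable_pt_lim (fun t => fst (Cmult v (f (Cmult (RtoC t) z)))) t0 (fst (Cmult v (Cmult l z))).
Proof.
  intros Hf eps Heps. pose proof (isD_CD _ _ _ Hf) as HC.
  set (K := Cmod v * Cmod z + 1).
  assert (HK : 0 < K) by (unfold K; pose proof (Cmod_ge_0 v); pose proof (Cmod_ge_0 z); nra).
  destruct (HC (eps / (2 * K))) as [d [Hd Hd']]. apply Rdiv_lt_0_compat; lra.
  assert (Hd2 : 0 < d / (Cmod z + 1)) by (apply Rdiv_lt_0_compat; auto; pose proof (Cmod_ge_0 z); lra).
  exists (mkposreal _ Hd2). intros h Hh0 Hh. simpl in Hh.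
  set (w := Cmult (RtoC t0) z). set (w' := Cmult (RtoC (t0 + h)) z).
  assert (Ew : Cminus w' w = Cmult (RtoC h) z) by (unfold w, w'; rewrite RtoC_plus; ring).
  assert (Hw : Cmod (Cminus w' w) < d).
  { rewrite Ew, Cmod_RtoC_mult. pose proof (Cmod_ge_0 z).
    apply Rle_lt_trans with (Rabs h * (Cmod z + 1)). apply Rmult_le_compat_l. apply Rabs_pos. lra.
    apply (Rmult_lt_compat_r (Cmod z + 1)) in Hh; [|lra]. replace (d / (Cmod z + 1) * (Cmod z + 1)) with d in Hh by (field; lra). exact Hh. }
  specialize (Hd' w' Hw). fold w in Hd'.
  replace ((fst (Cmult v (f w')) - fst (Cmult v (f w))) / h - fst (Cmult v (Cmult l z)))
    with (fst (Cmult v (Cminus (Cminus (f w') (f w)) (Cmult l (Cminus w' w)))) / h).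
  2: { rewrite Ew. destruct v as [v1 v2], (f w') as [p1 p2], (f w) as [q1 q2], l as [l1 l2], z as [z1 z2].
       unfold Cmult, Cminus, Cplus, Copp, RtoC. simpl. field. auto. }
  unfold Rdiv. rewrite Rabs_mult, Rabs_inv.
  eapply Rle_lt_trans. apply Rmult_le_compat_r. left; apply Rinv_0_lt_compat; apply Rabs_pos_lt; auto.
  eapply Rle_trans. apply Rabs_fst_le. rewrite Cmod_mult. apply Rmult_le_compat_l. apply Cmod_ge_0. exact Hd'.
  rewrite Ew, Cmod_RtoC_mult.
  assert (0 < Rabs h) by (apply Rabs_pos_lt; auto).
  replace (Cmod v * (eps / (2 * K) * (Rabs h * Cmod z)) * / Rabs h) with (Cmod v * Cmod z * (eps / (2 * K))) by (field; split; lra).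
  apply Rle_lt_trans with (K * (eps / (2 * K))).
  apply Rmult_le_compat_r. left; apply Rdiv_lt_0_compat; lra. unfold K; lra.
  replace (K * (eps / (2 * K))) with (eps / 2) by (field; lra). lra.
Qed.

Lemma fst_conj_mult a : fst (Cmult (Cconj a) a) = Cmod a ^ 2.
Proof.
  destruct a as [a1 a2]. unfold Cmod, Cconj, Cmult. simpl. repeat rewrite Rmult_1_r. rewrite sqrt_sqrt by nra. ring.
Qed.

Lemma f_bound f z : in_B10 f -> in_disc z -> Cmod (f z) <= bloch_norm f * (- ln (1 - Cmod z)).
Proof.
  intros [HB Hf0] Hz.
  destruct (bloch_props f HB) as (_ & _ & HN).
  set (N := bloch_norm f) in *.
  set (r := Cmod z).
  assert (Hr : 0 <= r < 1) by (unfold r; split; [apply Cmod_ge_0| exact Hz]).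
  assert (HL : 0 <= - ln (1 - r)).
  { assert (ln (1 - r) <= 0) by (rewrite <- ln_1; apply ln_le; lra). lra. }
  destruct (Ceq_dec (f z) (RtoC 0)) as [E|E].
  { rewrite E, Cmod_0. nra. }
  set (m := Cmod (f z)).
  assert (Hm : 0 < m) by (apply Cmod_gt_0; auto).
  set (v := Cconj (f z)).
  assert (Htz : forall t, 0 <= t <= 1 -> in_disc (Cmult (RtoC t) z)).
  { intros t Ht. unfold in_disc. rewrite Cmod_RtoC_mult, Rabs_right by lra. fold r. nra. }
  set (psi := fun t => fst (Cmult v (f (Cmult (RtoC t) z))) + m * N * ln (1 - t * r)).
  set (psi' := fun t => fst (Cmult v (Cmult (C_derive f (Cmult (RtoC t) z)) z)) + m * N * (- r / (1 - t * r))).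
  destruct (MVT_cor2 psi psi' 0 1 Rlt_0_1) as [c [Hc Hcr]].
  { intros c Hc. unfold psi, psi'. apply derivable_pt_lim_plus.
    - apply real_chain. apply analytic_isD. apply HB. apply Htz; auto.
    - apply derivable_pt_lim_scal. apply is_derive_Reals. auto_derive. nra. field. nra. }
  assert (Hpsi1 : psi 1 = m * m + m * N * ln (1 - r)).
  { unfold psi. replace (Cmult (RtoC 1) z) with z by ring. unfold v. rewrite fst_conj_mult. fold m. 
    replace (1 * r) with r by ring. ring. }
  assert (Hpsi0 : psi 0 = 0).
  { unfold psi. replace (Cmult (RtoC 0) z) with (RtoC 0) by ring. rewrite Hf0.
    replace (0 * r) with 0 by ring. rewrite Rminus_0_r, ln_1. unfold Cmult, RtoC. simpl. ring. }
  assert (Hder : psi' c <= 0).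
  { unfold psi'. 
    assert (Dc := Htz c ltac:(lra)).
    pose proof (deriv_bound f _ HB Dc) as Hdb. rewrite Cmod_RtoC_mult, Rabs_right in Hdb by lra. fold r in Hdb.
    set (dd := Cmod (C_derive f (Cmult (RtoC c) z))) in *.
    assert (Hdd : 0 <= dd) by apply Cmod_ge_0.
    assert (Hfst : fst (Cmult v (Cmult (C_derive f (Cmult (RtoC c) z)) z)) <= m * dd * r).
    { eapply Rle_trans. apply Rle_abs. eapply Rle_trans. apply Rabs_fst_le. rewrite !Cmod_mult. unfold v. rewrite Cmod_conj. fold m dd r. lra. }
    assert (Hcr1 : 0 < 1 - c * r) by nra.
    assert (Hdd' : dd * (1 - c * r) <= N).
    { fold N in Hdb. assert (Hq0 : 0 <= c * r) by (apply Rmult_le_pos; lra).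
      assert (Hq1 : c * r <= 1) by (apply Rle_trans with (1 * 1); [apply Rmult_le_compat; lra| lra]).
      assert ((c * r) ^ 2 <= c * r) by (simpl; rewrite Rmult_1_r; apply Rle_trans with (1 * (c * r)); [apply Rmult_le_compat_r; lra | lra]).
      assert (0 <= dd * (c * r - (c * r) ^ 2)) by (apply Rmult_le_pos; lra). lra. }
    assert (m * dd * r <= m * N * (r / (1 - c * r))).
    { unfold Rdiv. 
      assert (dd <= N * / (1 - c * r)). { apply (Rmult_le_reg_r (1 - c * r)); auto. rewrite Rmult_assoc, Rinv_l, Rmult_1_r by lra. lra. }
      assert (0 <= m * r) by nra.
      replace (m * dd * r) with ((m * r) * dd) by ring. replace (m * N * (r * / (1 - c * r))) with ((m * r) * (N * / (1 - c * r))) by ring.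
      apply Rmult_le_compat_l; auto. }
    replace (m * N * (- r / (1 - c * r))) with (- (m * N * (r / (1 - c * r)))) by (field; lra).
    lra. }
  rewrite Hpsi1, Hpsi0 in Hc. replace (1 - 0) with 1 in Hc by ring. rewrite Rmult_1_r in Hc.
  assert (m * (m + N * ln (1 - r)) <= 0) by nra.
  assert (m + N * ln (1 - r) <= 0).
  { destruct (Rle_dec (m + N * ln (1 - r)) 0); auto. exfalso. nra. }
  lra.
Qed.

Lemma gf_bound beta f z : beta < 1 -> in_B10 f -> in_disc z ->
  (1 - Cmod z ^ 2) * Cmod (gf beta f z) <= Kc beta * bloch_norm f.
Proof.
  intros Hb Hf Hz.
  destruct (bloch_props f (proj1 Hf)) as (_ & _ & HN).
  pose proof (Kc_ge1 beta Hb) as HK.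
  unfold gf. destruct (Ceq_dec z (RtoC 0)) as [->|Hz0].
  - pose proof (deriv_bound f (RtoC 0) (proj1 Hf) Hz). nra.
  - set (r := Cmod z). assert (Hr : 0 < r < 1) by (split; [apply Cmod_gt_0; auto| exact Hz]).
    set (s := Cmod (Cminus (RtoC 1) z)).
    assert (Hs : 1 - r <= s <= 1 + r).
    { unfold s, r. split.
      - pose proof (Cmod_sub_ge (Cminus (RtoC 1) z) (RtoC 1)). replace (Cminus (Cminus (RtoC 1) z) (RtoC 1)) with (Copp z) in H by ring.
        rewrite Cmod_opp, Cmod_1 in H. lra.
      - pose proof (Cmod_sub_le (Cminus (RtoC 1) z) (RtoC 1)). replace (Cminus (Cminus (RtoC 1) z) (RtoC 1)) with (Copp z) in H by ring.
        rewrite Cmod_opp, Cmod_1 in H. lra. }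
    pose proof (key_real beta r s Hb Hr Hs) as Kr.
    pose proof (f_bound f z Hf Hz) as Fb. fold r in Fb.
    unfold Cdiv. rewrite Cmod_mult, Cmod_inv, Cmod_mult, Cmod_Pw by (apply Cmult_neq_0; auto; apply Pw_neq0).
    fold r s.
    pose proof (exp_pos (beta * ln s)) as HE.
    replace (1 - r ^ 2) with (1 - r * r) by ring.
    assert (HLn : 0 <= - ln (1 - r)). { assert (ln (1 - r) <= 0) by (rewrite <- ln_1; apply ln_le; lra). lra. }
    assert (Hpos : 0 < r * exp (beta * ln s)) by nra.
    apply (Rmult_le_reg_r (r * exp (beta * ln s))); auto.
    replace ((1 - r * r) * (Cmod (f z) * / (r * exp (beta * ln s))) * (r * exp (beta * ln s)))
      with ((1 - r * r) * Cmod (f z)) by (field; lra).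
    assert (H1 : (1 - r * r) * Cmod (f z) <= (1 - r * r) * (bloch_norm f * - ln (1 - r))) by (apply Rmult_le_compat_l; nra).
    assert (H2 : bloch_norm f * ((1 - r * r) * (- ln (1 - r))) <= bloch_norm f * (Kc beta * (r * exp (beta * ln s)))) by (apply Rmult_le_compat_l; auto).
    nra.
Qed.

Lemma HolD_gf beta f : in_B10 f -> HolD (gf beta f).
Proof.
  intros [[Ha _] Hf0]. split.
  - intros w Hw. apply gf_cont; auto.
  - intros w Hw Hw0. apply gf_isD; auto.
Qed.

Lemma cesaro_isD beta f z : in_B10 f -> in_disc z -> isD (cesaro beta f) z (gf beta f z).
Proof.
  intros Hf Hz. eapply isD_ext. intros w. symmetry. apply cesaro_seg.
  apply prim_deriv; auto. apply HolD_gf, Hf.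
Qed.

Definition cesF (beta : R) (f : C -> C) (z : C) (t : R) : C :=
  Cmult (Cdiv (f (Cmult (RtoC t) z))
              (Cmult (Cmult (RtoC t) z) (Defs.Cpow (Cminus (RtoC 1) (Cmult (RtoC t) z)) beta))) z.

Lemma cesF_is beta f z : in_B10 f -> in_disc z -> is_RInt (V:=CV) (cesF beta f z) 0 1 (cesaro beta f z).
Proof.
  intros Hf Hz. rewrite cesaro_seg.
  apply (is_RInt_ext (V:=CV)) with (segF (gf beta f) (RtoC 0) z).
  2: { apply seg_is. apply HolD_SegCont; auto using in_disc_0. apply HolD_gf, Hf. }
  rewrite Rmin_left, Rmax_right by lra. intros t Ht.
  unfold segF, cesF. symmetry. change (@eq C
    (Cmult (Cdiv (f (Cmult (RtoC t) z)) (Cmult (Cmult (RtoC t) z) (Defs.Cpow (Cminus (RtoC 1) (Cmult (RtoC t) z)) beta))) z)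
    (Cmult (gf beta f (Cplus (RtoC 0) (Cmult (RtoC t) (Cminus z (RtoC 0))))) (Cminus z (RtoC 0)))).
  replace (Cplus (RtoC 0) (Cmult (RtoC t) (Cminus z (RtoC 0)))) with (Cmult (RtoC t) z) by ring.
  replace (Cminus z (RtoC 0)) with z by ring.
  destruct (Ceq_dec z (RtoC 0)) as [->|Hz0]. { rewrite !Cmult_0_r. reflexivity. }
  unfold gf. destruct (Ceq_dec (Cmult (RtoC t) z) (RtoC 0)) as [E|E].
  { exfalso. revert E. apply Cmult_neq_0; auto. intros Et. apply RtoC_inj in Et. lra. }
  reflexivity.
Qed.

Lemma is_RInt_Cmult (F : R -> C) a b (l c : C) : is_RInt (V:=CV) F a b l -> is_RInt (V:=CV) (fun t => Cmult c (F t)) a b (Cmult c l).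
Proof.
  intros H.
  pose proof (is_RInt_fct_extend_fst (U:=R_NormedModule) (V:=R_NormedModule) F a b l H) as H1.
  pose proof (is_RInt_fct_extend_snd (U:=R_NormedModule) (V:=R_NormedModule) F a b l H) as H2.
  destruct c as [c1 c2].
  apply (is_RInt_ext (V:=CV)) with (fun t => (c1 * fst (F t) - c2 * snd (F t), c1 * snd (F t) + c2 * fst (F t)) : CV).
  { intros t _. unfold Cmult. simpl. f_equal; ring. }
  replace (Cmult (c1, c2) l) with ((c1 * fst l - c2 * snd l, c1 * snd l + c2 * fst l) : C) by (unfold Cmult; simpl; f_equal; ring).
  apply (is_RInt_fct_extend_pair (U:=R_NormedModule) (V:=R_NormedModule)); simpl.
  - apply (is_RInt_minus (V:=R_NormedModule)); apply (is_RInt_scal (V:=R_NormedModule)); auto.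
  - apply (is_RInt_plus (V:=R_NormedModule)); apply (is_RInt_scal (V:=R_NormedModule)); auto.
Qed.

Theorem theorem2p4 (beta : R) (Hbeta : beta < 1) :
  (* C_beta maps B_1^0 into B_1^0 *)
  (forall f : C -> C, in_B10 f -> in_B10 (cesaro beta f)) /\
  (* C_beta is linear on B_1^0 (as functions on the disc) *)
  (forall (f g : C -> C) (a b : C), in_B10 f -> in_B10 g ->
     forall z : C, in_disc z ->
       cesaro beta (fun w => Cplus (Cmult a (f w)) (Cmult b (g w))) z =
       Cplus (Cmult a (cesaro beta f z)) (Cmult b (cesaro beta g z))) /\
  (* C_beta is bounded for the B_1 norm *)
  (exists K : R, 0 <= K /\
     forall f : C -> C, in_B10 f ->
       bloch_norm (cesaro beta f) <= K * bloch_norm f).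
Proof.
  assert (Main : forall f, in_B10 f -> in_B10 (cesaro beta f) /\
            forall r, bloch_vals (cesaro beta f) r -> r <= Kc beta * bloch_norm f).
  { intros f Hf.
    assert (Hder : forall z l, in_disc z -> @is_derive C_AbsRing C_NormedModule (cesaro beta f) z l -> l = gf beta f z).
    { intros z l Hz Hl. rewrite <- (is_C_derive_unique _ _ _ Hl).
      apply is_C_derive_unique. apply isD_derive. apply cesaro_isD; auto. }
    assert (Hbv : forall r, bloch_vals (cesaro beta f) r -> r <= Kc beta * bloch_norm f).
    { intros r (z & l & Hz & Hl & ->). rewrite (Hder z l Hz Hl). apply gf_bound; auto. }
    split; [|exact Hbv]. split; [split|].
    - intros z Hz. exists (gf beta f z). apply isD_derive, cesaro_isD; auto.
    - exists (Kc beta * bloch_norm f). exact Hbv.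
    - rewrite cesaro_seg. apply seg_same. }
  split; [intros f Hf; apply Main, Hf|].
  split.
  - intros f g a b Hf Hg z Hz.
    pose proof (cesF_is beta f z Hf Hz) as H1. pose proof (cesF_is beta g z Hg Hz) as H2.
    unfold cesaro at 1. apply (is_RInt_unique (V:=CV)).
    apply (is_RInt_ext (V:=CV)) with (fun t => (plus (Cmult a (cesF beta f z t) : CV) (Cmult b (cesF beta g z t) : CV) : CV)).
    { intros t _. unfold cesF, Cdiv. change (@eq C
        (Cplus (Cmult a (Cmult (Cmult (f (Cmult (RtoC t) z)) (Cinv (Cmult (Cmult (RtoC t) z) (Defs.Cpow (Cminus (RtoC 1) (Cmult (RtoC t) z)) beta)))) z))
               (Cmult b (Cmult (Cmult (g (Cmult (RtoC t) z)) (Cinv (Cmult (Cmult (RtoC t) z) (Defs.Cpow (Cminus (RtoC 1) (Cmult (RtoC t) z)) beta)))) z)))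
        (Cmult (Cmult (Cplus (Cmult a (f (Cmult (RtoC t) z))) (Cmult b (g (Cmult (RtoC t) z))))
          (Cinv (Cmult (Cmult (RtoC t) z) (Defs.Cpow (Cminus (RtoC 1) (Cmult (RtoC t) z)) beta)))) z)).
      ring. }
    apply (is_RInt_plus (V:=CV)); apply is_RInt_Cmult; auto.
  - exists (Kc beta). split. pose proof (Kc_ge1 beta Hbeta); lra.
    intros f Hf. destruct (Main f Hf) as [HC Hb].
    destruct (bloch_props _ (proj1 HC)) as (_ & Hub & _). apply Hub, Hb.
Qed.
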